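(* Let $0<\delta<\frac12$ and let $G$ be a subgroup of $\mathrm{Diff}_0^3(I)$ satisfying condition (a): there exists $c>0$ such that for all $g_1\ne g_2$ in $G$, $\sup_{t\in[0,1]}|\log(g_1'(t))-\log(g_2'(t))|\ge c$. Define $r_\delta(f)=\inf_{h\in G}p_\delta(h^{-1}\circ f)$ for $f\in\mathrm{Diff}_+^{1,\delta}(I)$. Then the functions $p_\delta$ and $r_\delta$ are continuous from $\mathrm{Diff}_+^{1,\delta}(I)$ (with the norm $\|\cdot\|_{1,\delta}$) to $\mathbb{R}$.
   Context: $I=[0,1]$. $\mathrm{Diff}_+^1(I)$ is the set of $C^1$ diffeomorphisms of $I$ fixing $0$ and $1$. $C_0^{1,\delta}(I)$ is the set of continuously differentiable $f:I\to\mathbb{R}$ with $f(0)=0$ and $f'$ Hölder of exponent $\delta$, normed by $\|f\|_{1,\delta}=|f'(0)|+\sup_{t_1\ne t_2}\frac{|f'(t_2)-f'(t_1)|}{|t_2-t_1|^\delta}$; $\mathrm{Diff}_+^{1,\delta}(I)=\mathrm{Diff}_+^1(I)\cap C_0^{1,\delta}(I)$ with this norm. $\mathrm{Diff}_0^3(I)$ is the set of $C^3$ diffeomorphisms $f$ of $I$ fixing $0$ and $1$ with $f'(0)=f'(1)=1$. For $f\in\mathrm{Diff}_+^{1,\delta}(I)$, $p_\delta(f)=|\log(f'(0))|+\sup_{t_1\ne t_2\in I}\frac{|\log(f'(t_2))-\log(f'(t_1))|}{|t_2-t_1|^\delta}$. *)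

(* Defs.v *)
From Stdlib Require Import Reals Lra ClassicalEpsilon.
Open Scope R_scope.

(* The interval I = [0,1] as a predicate on R. Maps of I are represented by
   functions R -> R; only their values on I matter. *)
Definition I (x : R) : Prop := 0 <= x <= 1.

Definition has_derI (f : R -> R) (x l : R) : Prop :=
  forall eps, 0 < eps -> exists del, 0 < del /\
    forall y, I y -> y <> x -> Rabs (y - x) < del ->
      Rabs ((f y - f x) / (y - x) - l) < eps.

(* The derivative relative to I (chosen; unique on I when it exists). *)
Definition derI (f : R -> R) (x : R) : R :=
  epsilon (inhabits 0) (fun l => has_derI f x l).

Fixpoint derIn (n : nat) (f : R -> R) : R -> R :=
  match n with O => f | S m => derI (derIn m f) end.

Definition contI (u : R -> R) : Prop :=
  forall x, I x -> forall eps, 0 < eps -> exists del, 0 < del /\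
    forall y, I y -> Rabs (y - x) < del -> Rabs (u y - u x) < eps.

Definition is_Ck (k : nat) (f : R -> R) : Prop :=
  (forall j, (j < k)%nat -> forall x, I x -> has_derI (derIn j f) x (derIn (S j) f x))
  /\ contI (derIn k f).

Definition maps_I (f : R -> R) : Prop := forall x, I x -> I (f x).

Definition inv_on_I (f g : R -> R) : Prop :=
  maps_I f /\ maps_I g /\ forall x, I x -> g (f x) = x /\ f (g x) = x.

Definition same_on_I (f g : R -> R) : Prop := forall x, I x -> f x = g x.

Definition is_Ck_diffeo (k : nat) (f : R -> R) : Prop :=
  is_Ck k f /\ exists g, inv_on_I f g /\ is_Ck k g.

Definition Diff1p (f : R -> R) : Prop := is_Ck_diffeo 1 f /\ f 0 = 0 /\ f 1 = 1.

Definition Diff03 (f : R -> R) : Prop :=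
  is_Ck_diffeo 3 f /\ f 0 = 0 /\ f 1 = 1 /\ derI f 0 = 1 /\ derI f 1 = 1.

(* supremum / infimum of a set of reals (meaningful when they exist) *)
Definition is_glb (S : R -> Prop) (m : R) : Prop :=
  (forall r, S r -> m <= r) /\ (forall b, (forall r, S r -> b <= r) -> b <= m).
Definition Rsup (S : R -> Prop) : R := epsilon (inhabits 0) (fun m => is_lub S m).
Definition Rinf (S : R -> Prop) : R := epsilon (inhabits 0) (fun m => is_glb S m).

Definition holder_set (delta : R) (u : R -> R) (r : R) : Prop :=
  exists t1 t2, I t1 /\ I t2 /\ t1 <> t2 /\
    r = Rabs (u t2 - u t1) / Rpower (Rabs (t2 - t1)) delta.

Definition C01d (delta : R) (f : R -> R) : Prop :=
  is_Ck 1 f /\ f 0 = 0 /\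
  exists K, forall t1 t2, I t1 -> I t2 -> t1 <> t2 ->
    Rabs (derI f t2 - derI f t1) <= K * Rpower (Rabs (t2 - t1)) delta.

Definition norm1d (delta : R) (f : R -> R) : R :=
  Rabs (derI f 0) + Rsup (holder_set delta (derI f)).

Definition Diff1d (delta : R) (f : R -> R) : Prop := Diff1p f /\ C01d delta f.

Definition p_delta (delta : R) (f : R -> R) : R :=
  Rabs (ln (derI f 0)) + Rsup (holder_set delta (fun t => ln (derI f t))).

(* G (a set of representatives of maps of I) is a subgroup of Diff^3_0(I) *)
Definition is_subgroup_Diff03 (G : (R -> R) -> Prop) : Prop :=
  (forall g, G g -> Diff03 g) /\
  (exists e, G e /\ same_on_I e (fun x => x)) /\
  (forall g h, G g -> G h -> exists k, G k /\ same_on_I k (fun x => g (h x))) /\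
  (forall g, G g -> exists k, G k /\ inv_on_I g k).

Definition condition_a (G : (R -> R) -> Prop) : Prop :=
  exists c, 0 < c /\ forall g1 g2, G g1 -> G g2 -> ~ same_on_I g1 g2 ->
    Rsup (fun r => exists t, I t /\ r = Rabs (ln (derI g1 t) - ln (derI g2 t))) >= c.

Definition r_delta (G : (R -> R) -> Prop) (delta : R) (f : R -> R) : R :=
  Rinf (fun r => exists h hinv, G h /\ inv_on_I h hinv /\
                   r = p_delta delta (fun x => hinv (f x))).

Definition cont_Diff1d (delta : R) (F : (R -> R) -> R) : Prop :=
  forall f, Diff1d delta f -> forall eps, 0 < eps -> exists eta, 0 < eta /\
    forall g, Diff1d delta g -> norm1d delta (fun x => g x - f x) < eta ->
      Rabs (F g - F f) < eps.

(* Main.v *)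
Require Import Defs.
From Stdlib Require Import Reals Lra Lia ZArith List ClassicalEpsilon FunctionalExtensionality PropExtensionality.
Open Scope R_scope.

Definition hd2 (f : R -> R) (x l : R) : Prop :=
  forall eps, 0 < eps -> exists del, 0 < del /\
    forall y, I y -> Rabs (y - x) < del ->
      Rabs (f y - f x - l * (y - x)) <= eps * Rabs (y - x).

Lemma hd_hd2 f x l : has_derI f x l -> hd2 f x l.
Proof.
  intros H eps Heps. destruct (H eps Heps) as [d [Hd Hy]].
  exists d; split; auto. intros y Iy Hyx.
  destruct (Req_dec y x) as [->|Hne].
  { replace (f x - f x - l * (x - x)) with 0 by ring. rewrite Rabs_R0.
    replace (x - x) with 0 by ring. rewrite Rabs_R0. lra. }
  specialize (Hy y Iy Hne Hyx).
  assert (Hyx0 : y - x <> 0) by lra.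
  replace (f y - f x - l * (y - x)) with (((f y - f x) / (y - x) - l) * (y - x))
    by (field; auto).
  rewrite Rabs_mult. apply Rmult_le_compat_r; [apply Rabs_pos|lra].
Qed.

Lemma hd2_hd f x l : hd2 f x l -> has_derI f x l.
Proof.
  intros H eps Heps. destruct (H (eps/2)) as [d [Hd Hy]]; [lra|].
  exists d; split; auto. intros y Iy Hne Hyx.
  specialize (Hy y Iy Hyx).
  assert (Hyx0 : y - x <> 0) by lra.
  assert (Ha : 0 < Rabs (y - x)) by (apply Rabs_pos_lt; auto).
  replace ((f y - f x) / (y - x) - l) with ((f y - f x - l * (y - x)) / (y - x))
    by (field; auto).
  unfold Rdiv. rewrite Rabs_mult, Rabs_inv.
  apply (Rmult_le_compat_r (/ Rabs (y - x))) in Hy; [|left; apply Rinv_0_lt_compat; auto].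
  replace (eps / 2 * Rabs (y - x) * / Rabs (y - x)) with (eps/2) in Hy by (field; lra).
  lra.
Qed.

Lemma near_point x d : I x -> 0 < d -> exists y, I y /\ y <> x /\ Rabs (y - x) < d.
Proof.
  intros [H0 H1] Hd. set (e := Rmin d 1 / 2).
  assert (He : 0 < e) by (unfold e; apply Rmin_case; lra).
  assert (He2 : e < d /\ e <= 1/2) by (unfold e; split; [apply Rmin_case_strong; lra | apply Rmin_case_strong; intros; lra]).
  destruct (Rle_dec x (1/2)).
  - exists (x + e). unfold I. split; [lra|split;[lra|]].
    replace (x + e - x) with e by ring. rewrite Rabs_right; lra.
  - exists (x - e). unfold I. split; [lra|split;[lra|]].
    replace (x - e - x) with (- e) by ring. rewrite Rabs_Ropp, Rabs_right; lra.
Qed.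

Lemma hd2_unique f x l1 l2 : I x -> hd2 f x l1 -> hd2 f x l2 -> l1 = l2.
Proof.
  intros Ix H1 H2. destruct (Req_dec l1 l2) as [|Hne]; auto. exfalso.
  assert (Hp : 0 < Rabs (l1 - l2)) by (apply Rabs_pos_lt; lra).
  destruct (H1 (Rabs (l1 - l2) / 4)) as [d1 [Hd1 Hy1]]; [lra|].
  destruct (H2 (Rabs (l1 - l2) / 4)) as [d2 [Hd2 Hy2]]; [lra|].
  destruct (near_point x (Rmin d1 d2) Ix) as [y [Iy [Hyx Hd]]]; [apply Rmin_case; lra|].
  assert (Hy1' := Hy1 y Iy (Rlt_le_trans _ _ _ Hd (Rmin_l _ _))).
  assert (Hy2' := Hy2 y Iy (Rlt_le_trans _ _ _ Hd (Rmin_r _ _))).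
  assert (Hq : 0 < Rabs (y - x)) by (apply Rabs_pos_lt; lra).
  assert (E : (l1 - l2) * (y - x) = (f y - f x - l2 * (y - x)) - (f y - f x - l1 * (y - x))) by ring.
  assert (Rabs ((l1 - l2) * (y - x)) <= Rabs (l1 - l2) / 2 * Rabs (y - x)).
  { rewrite E. eapply Rle_trans; [apply Rabs_triang|]. rewrite Rabs_Ropp. lra. }
  rewrite Rabs_mult in H.
  assert (Rabs (l1 - l2) * Rabs (y - x) > 0) by (apply Rmult_lt_0_compat; auto).
  lra.
Qed.

Lemma derI_spec f x l : I x -> has_derI f x l -> derI f x = l.
Proof.
  intros Ix H. unfold derI.
  assert (Hs : has_derI f x (epsilon (inhabits 0) (fun l => has_derI f x l))).
  { apply epsilon_spec. exists l; auto. }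
  apply (hd2_unique f x); auto; apply hd_hd2; auto.
Qed.

Lemma hd2_derI f x l : I x -> hd2 f x l -> derI f x = l.
Proof. intros; apply derI_spec; auto; apply hd2_hd; auto. Qed.

Lemma hd2_cont f x l : hd2 f x l -> forall eps, 0 < eps -> exists del, 0 < del /\
  forall y, I y -> Rabs (y - x) < del -> Rabs (f y - f x) < eps.
Proof.
  intros H eps Heps. destruct (H 1) as [d [Hd Hy]]; [lra|].
  set (d' := Rmin d (eps / (Rabs l + 2))).
  assert (Hl : 0 < Rabs l + 2) by (pose proof (Rabs_pos l); lra).
  assert (Hd' : 0 < d') by (unfold d'; apply Rmin_case; [lra| apply Rdiv_lt_0_compat; lra]).
  exists d'; split; auto. intros y Iy Hyx.
  assert (Hyx1 : Rabs (y - x) < d) by (eapply Rlt_le_trans; [apply Hyx|apply Rmin_l]).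
  assert (Hyx2 : Rabs (y - x) < eps / (Rabs l + 2)) by (eapply Rlt_le_trans; [apply Hyx|apply Rmin_r]).
  specialize (Hy y Iy Hyx1).
  replace (f y - f x) with ((f y - f x - l * (y - x)) + l * (y - x)) by ring.
  eapply Rle_lt_trans; [apply Rabs_triang|]. rewrite Rabs_mult.
  assert (Rabs (y - x) * (Rabs l + 2) < eps).
  { apply (Rmult_lt_compat_r (Rabs l + 2)) in Hyx2; auto.
    replace (eps / (Rabs l + 2) * (Rabs l + 2)) with eps in Hyx2 by (field; lra). lra. }
  pose proof (Rabs_pos l). pose proof (Rabs_pos (y - x)). nra.
Qed.

Lemma hd2_ext f g x l : (forall y, I y -> f y = g y) -> I x -> hd2 f x l -> hd2 g x l.
Proof.
  intros E Ix H eps Heps. destruct (H eps Heps) as [d [Hd Hy]]. exists d; split; auto.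
  intros y Iy Hyx. rewrite <- (E y Iy), <- (E x Ix). auto.
Qed.

Lemma hd2_id x : hd2 (fun y => y) x 1.
Proof.
  intros eps Heps. exists 1; split; [lra|]. intros y _ _.
  replace (y - x - 1 * (y - x)) with 0 by ring. rewrite Rabs_R0.
  pose proof (Rabs_pos (y - x)). nra.
Qed.

Lemma hd2_minus f g x a b : hd2 f x a -> hd2 g x b -> hd2 (fun y => f y - g y) x (a - b).
Proof.
  intros Hf Hg eps Heps.
  destruct (Hf (eps/2)) as [d1 [Hd1 H1]]; [lra|].
  destruct (Hg (eps/2)) as [d2 [Hd2 H2]]; [lra|].
  exists (Rmin d1 d2); split; [apply Rmin_case; lra|]. intros y Iy Hyx.
  specialize (H1 y Iy (Rlt_le_trans _ _ _ Hyx (Rmin_l _ _))).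
  specialize (H2 y Iy (Rlt_le_trans _ _ _ Hyx (Rmin_r _ _))).
  replace (f y - g y - (f x - g x) - (a - b) * (y - x)) with
    ((f y - f x - a * (y - x)) - (g y - g x - b * (y - x))) by ring.
  eapply Rle_trans; [apply Rabs_triang|]. rewrite Rabs_Ropp. lra.
Qed.

Lemma hd2_chain u F x a b : maps_I u -> I x -> hd2 u x a -> hd2 F (u x) b ->
  hd2 (fun y => F (u y)) x (b * a).
Proof.
  intros Mu Ix Hu HF eps Heps.
  assert (Ha : 0 < Rabs a + 1) by (pose proof (Rabs_pos a); lra).
  assert (Hb : 0 < Rabs b + 1) by (pose proof (Rabs_pos b); lra).
  destruct (HF (eps / (2 * (Rabs a + 1)))) as [dF [HdF H1]]; [apply Rdiv_lt_0_compat; lra|].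
  destruct (Hu 1) as [du [Hdu H2]]; [lra|].
  destruct (Hu (eps / (2 * (Rabs b + 1)))) as [d3 [Hd3 H3]]; [apply Rdiv_lt_0_compat; lra|].
  set (d := Rmin (Rmin du d3) (dF / (Rabs a + 1))).
  assert (Hd : 0 < d) by (unfold d; repeat apply Rmin_case; try lra; apply Rdiv_lt_0_compat; lra).
  exists d; split; auto. intros y Iy Hyx.
  assert (Hyu : Rabs (y - x) < du) by (eapply Rlt_le_trans; [apply Hyx|]; unfold d;
     eapply Rle_trans; [apply Rmin_l|apply Rmin_l]).
  assert (Hy3 : Rabs (y - x) < d3) by (eapply Rlt_le_trans; [apply Hyx|]; unfold d;
     eapply Rle_trans; [apply Rmin_l|apply Rmin_r]).
  assert (HyF : Rabs (y - x) < dF / (Rabs a + 1)) by (eapply Rlt_le_trans; [apply Hyx|]; unfold d; apply Rmin_r).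
  pose proof (H2 y Iy Hyu) as H2'. pose proof (H3 y Iy Hy3) as H3'.
  assert (Hux : Rabs (u y - u x) <= (Rabs a + 1) * Rabs (y - x)).
  { replace (u y - u x) with ((u y - u x - a * (y - x)) + a * (y - x)) by ring.
    eapply Rle_trans; [apply Rabs_triang|]. rewrite Rabs_mult. lra. }
  assert (HuF : Rabs (u y - u x) < dF).
  { eapply Rle_lt_trans; [apply Hux|].
    apply (Rmult_lt_compat_l (Rabs a + 1)) in HyF; auto.
    replace ((Rabs a + 1) * (dF / (Rabs a + 1))) with dF in HyF by (field; lra). lra. }
  pose proof (H1 (u y) (Mu y Iy) HuF) as H1'.
  replace (F (u y) - F (u x) - b * a * (y - x)) with
    ((F (u y) - F (u x) - b * (u y - u x)) + b * (u y - u x - a * (y - x))) by ring.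
  eapply Rle_trans; [apply Rabs_triang|]. rewrite Rabs_mult.
  assert (X1 : eps / (2 * (Rabs a + 1)) * Rabs (u y - u x) <= eps / 2 * Rabs (y - x)).
  { apply Rmult_le_compat_l with (r := eps / (2 * (Rabs a + 1))) in Hux; [|left; apply Rdiv_lt_0_compat; lra].
    replace (eps / (2 * (Rabs a + 1)) * ((Rabs a + 1) * Rabs (y - x))) with (eps/2 * Rabs (y - x)) in Hux by (field; lra).
    lra. }
  assert (X2 : Rabs b * Rabs (u y - u x - a * (y - x)) <= eps / 2 * Rabs (y - x)).
  { eapply Rle_trans. apply Rmult_le_compat_l; [apply Rabs_pos|apply H3'].
    assert (Rabs b * (eps / (2 * (Rabs b + 1))) <= eps / 2).
    { unfold Rdiv. rewrite Rinv_mult. 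
      assert (Rabs b * / (Rabs b + 1) <= 1).
      { apply (Rmult_le_reg_r (Rabs b + 1)); auto. rewrite Rmult_assoc, Rinv_l; lra. }
      assert (0 < / (Rabs b + 1)) by (apply Rinv_0_lt_compat; lra).
      replace (Rabs b * (eps * (/ 2 * / (Rabs b + 1)))) with ((Rabs b * / (Rabs b + 1)) * (eps/2)) by (unfold Rdiv; ring).
      nra. }
    pose proof (Rabs_pos (y - x)). nra. }
  lra.
Qed.

Definition clamp (x : R) : R := Rmax 0 (Rmin 1 x).

Lemma clamp_I x : I (clamp x).
Proof. unfold clamp, I. split; [apply Rmax_l|]. apply Rmax_lub; [lra|apply Rmin_l]. Qed.

Lemma clamp_id x : I x -> clamp x = x.
Proof. unfold clamp, I; intros [H0 H1]. rewrite Rmin_right by lra. rewrite Rmax_right; lra. Qed.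

Lemma clamp_lip x y : Rabs (clamp y - clamp x) <= Rabs (y - x).
Proof.
  unfold clamp. unfold Rmax, Rmin.
  repeat (destruct Rle_dec); repeat (destruct Rle_dec); apply Rabs_le;
  (destruct (Rle_dec 0 (y - x)); [rewrite (Rabs_right (y - x)) by lra | rewrite (Rabs_left (y-x)) by lra]); lra.
Qed.

Definition relcont (u : R -> R) x := forall eps, 0 < eps -> exists del, 0 < del /\
    forall y, I y -> Rabs (y - x) < del -> Rabs (u y - u x) < eps.

Lemma relcont_clamp u x : (forall z, I z -> relcont u z) -> continuity_pt (fun y => u (clamp y)) x.
Proof.
  intros H. unfold continuity_pt, continue_in, limit1_in, limit_in; simpl; unfold Rdist.
  intros eps Heps. destruct (H (clamp x) (clamp_I x) eps Heps) as [d [Hd Hy]].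
  exists d; split; [lra|]. intros y [_ Hyx].
  apply Hy; [apply clamp_I|]. eapply Rle_lt_trans; [apply clamp_lip|]; auto.
Qed.

Lemma contI_relcont u : contI u -> forall z, I z -> relcont u z.
Proof. intros H z Iz. exact (H z Iz). Qed.

Lemma hd2_relcont u u' : (forall x, I x -> hd2 u x (u' x)) -> forall z, I z -> relcont u z.
Proof. intros H z Iz. exact (hd2_cont u z (u' z) (H z Iz)). Qed.

Lemma rmvt u u' a b : (forall x, I x -> hd2 u x (u' x)) -> I a -> I b -> a < b ->
  exists c, a < c < b /\ u b - u a = u' c * (b - a).
Proof.
  intros Hd Ia Ib Hab.
  set (uc := fun y => u (clamp y)).
  assert (Hder : forall c, a < c < b -> derivable_pt_lim uc c (u' c)).
  { intros c Hc eps Heps. destruct Ia, Ib.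
    assert (Ic : I c) by (unfold I; lra).
    destruct (Hd c Ic (eps/2)) as [d [Hdp Hy]]; [lra|].
    set (d' := Rmin d (Rmin c (1 - c))).
    assert (Hd' : 0 < d') by (unfold d'; repeat apply Rmin_case; lra).
    exists (mkposreal d' Hd'). simpl. intros h Hh0 Hh.
    assert (Hh1 : Rabs h < d) by (eapply Rlt_le_trans; [apply Hh|apply Rmin_l]).
    assert (Hh2 : Rabs h < Rmin c (1 - c)) by (eapply Rlt_le_trans; [apply Hh|apply Rmin_r]).
    assert (Hh3 : Rabs h < c /\ Rabs h < 1 - c) by (split; (eapply Rlt_le_trans; [apply Hh2|]); [apply Rmin_l|apply Rmin_r]).
    assert (Ich : I (c + h)).
    { destruct Hh3. unfold I. destruct (Rle_dec 0 h); [rewrite Rabs_right in * by lra | rewrite Rabs_left in * by lra]; lra. }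
    unfold uc. rewrite (clamp_id _ Ich), (clamp_id _ Ic).
    specialize (Hy (c + h) Ich). replace (c + h - c) with h in Hy by ring.
    specialize (Hy Hh1).
    assert (Hp : 0 < Rabs h) by (apply Rabs_pos_lt; auto).
    replace ((u (c + h) - u c) / h - u' c) with ((u (c + h) - u c - u' c * h) / h) by (field; auto).
    unfold Rdiv. rewrite Rabs_mult, Rabs_inv.
    apply (Rmult_le_compat_r (/ Rabs h)) in Hy; [|left; apply Rinv_0_lt_compat; auto].
    replace (eps / 2 * Rabs h * / Rabs h) with (eps/2) in Hy by (field; lra). lra. }
  set (pr1 := fun c (P : a < c < b) => exist (fun l => derivable_pt_abs uc c l) (u' c) (Hder c P)).
  set (pr2 := fun c (P : a < c < b) => derivable_pt_id c).
  assert (Hc1 : forall c, a <= c <= b -> continuity_pt uc c).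
  { intros c _. apply relcont_clamp. apply (hd2_relcont u u'); auto. }
  assert (Hc2 : forall c, a <= c <= b -> continuity_pt id c).
  { intros c _. apply derivable_continuous_pt. apply derivable_pt_id. }
  destruct (MVT uc id a b pr1 pr2 Hab Hc1 Hc2) as [c [P E]].
  exists c; split; auto.
  unfold pr2 in E. rewrite derive_pt_id in E. unfold pr1 in E. simpl in E.
  unfold uc, id in E. rewrite (clamp_id _ Ia), (clamp_id _ Ib) in E. lra.
Qed.

Lemma rlip u u' B : (forall x, I x -> hd2 u x (u' x)) -> (forall x, I x -> Rabs (u' x) <= B) ->
  forall a b, I a -> I b -> Rabs (u b - u a) <= B * Rabs (b - a).
Proof.
  intros Hd HB a b Ia Ib.
  destruct (Rtotal_order a b) as [Hab|[->|Hab]].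
  - destruct (rmvt u u' a b Hd Ia Ib Hab) as [c [Hc E]].
    assert (Ic : I c) by (destruct Ia, Ib; unfold I; lra).
    rewrite E, Rabs_mult. apply Rmult_le_compat_r; [apply Rabs_pos|auto].
  - replace (u b - u b) with 0 by ring. replace (b - b) with 0 by ring. rewrite Rabs_R0.
    pose proof (HB b Ib). pose proof (Rabs_pos (u' b)). lra.
  - destruct (rmvt u u' b a Hd Ib Ia Hab) as [c [Hc E]].
    assert (Ic : I c) by (destruct Ia, Ib; unfold I; lra).
    replace (u b - u a) with (- (u a - u b)) by ring. replace (b - a) with (- (a - b)) by ring.
    rewrite !Rabs_Ropp, E, Rabs_mult. apply Rmult_le_compat_r; [apply Rabs_pos|auto].
Qed.

Lemma rmin u : (forall z, I z -> relcont u z) -> exists x0, I x0 /\ forall x, I x -> u x0 <= u x.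
Proof.
  intros H. destruct (continuity_ab_min (fun y => u (clamp y)) 0 1) as [m [Hm Hm1]]; [lra| |].
  { intros c _. apply relcont_clamp; auto. }
  exists m. assert (Im : I m) by exact Hm1. split; auto.
  intros x Ix. specialize (Hm x Ix). rewrite !clamp_id in Hm; auto.
Qed.

Lemma rbound u : (forall z, I z -> relcont u z) -> exists B, forall x, I x -> Rabs (u x) <= B.
Proof.
  intros H. destruct (rmin u H) as [x0 [_ H0]].
  destruct (rmin (fun y => - u y)) as [x1 [_ H1]].
  { intros z Iz eps Heps. destruct (H z Iz eps Heps) as [d [Hd Hy]]. exists d; split; auto.
    intros y Iy Hyz. replace (- u y - - u z) with (- (u y - u z)) by ring. rewrite Rabs_Ropp; auto. }
  exists (Rabs (u x0) + Rabs (u x1)). intros x Ix. specialize (H0 x Ix). specialize (H1 x Ix).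
  apply Rabs_le. pose proof (Rabs_pos (u x0)). pose proof (Rabs_pos (u x1)).
  pose proof (Rle_abs (- u x0)) as Q1. rewrite Rabs_Ropp in Q1. pose proof (Rle_abs (u x1)). lra.
Qed.

Lemma rivt u : (forall z, I z -> relcont u z) -> forall a b, I a -> I b -> a < b ->
  u a < 0 -> 0 < u b -> exists c, I c /\ u c = 0.
Proof.
  intros H a b Ia Ib Hab Ha Hb.
  assert (Hc : continuity (fun y => u (clamp y))) by (intro; apply relcont_clamp; auto).
  destruct (IVT _ a b Hc Hab) as [c [Hc1 Hc2]]; [rewrite clamp_id; auto|rewrite clamp_id; auto|].
  exists c. assert (Ic : I c) by (destruct Ia, Ib; unfold I; lra). split; auto.
  rewrite clamp_id in Hc2; auto.
Qed.

Definition HB d (u : R -> R) K := forall t1 t2, I t1 -> I t2 -> t1 <> t2 ->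
  Rabs (u t2 - u t1) <= K * Rpower (Rabs (t2 - t1)) d.
Definition Hs d u := Rsup (holder_set d u).

Lemma exp_le x y : x <= y -> exp x <= exp y.
Proof. intros [H| ->]; [left; apply exp_increasing; auto|lra]. Qed.

Lemma ln_le x y : 0 < x -> x <= y -> ln x <= ln y.
Proof. intros H [H1| ->]; [left; apply ln_increasing; auto|lra]. Qed.

Lemma rp_pos x d : 0 < Rpower x d.
Proof. unfold Rpower; apply exp_pos. Qed.

Lemma rp_le1 x d : 0 < x <= 1 -> 0 <= d -> Rpower x d <= 1.
Proof.
  intros [H0 H1] Hd. unfold Rpower. rewrite <- exp_0. apply exp_le.
  assert (ln x <= 0) by (rewrite <- ln_1; apply ln_le; lra). nra.
Qed.

Lemma rp_ge x d : 0 < x <= 1 -> 0 <= d <= 1 -> x <= Rpower x d.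
Proof.
  intros [H0 H1] Hd. unfold Rpower. rewrite <- (exp_ln x) at 1 by auto. apply exp_le.
  assert (ln x <= 0) by (rewrite <- ln_1; apply ln_le; lra). nra.
Qed.

Lemma dist_I t1 t2 : I t1 -> I t2 -> t1 <> t2 -> 0 < Rabs (t2 - t1) <= 1.
Proof.
  unfold I; intros H1 H2 Hne. split; [apply Rabs_pos_lt; lra|].
  apply Rabs_le; lra.
Qed.

Lemma HB_K d u K : HB d u K -> 0 <= K.
Proof.
  intros H. specialize (H 0 1). unfold I in H.
  assert (A := H ltac:(lra) ltac:(lra) ltac:(lra)).
  pose proof (rp_pos (Rabs (1 - 0)) d). pose proof (Rabs_pos (u 1 - u 0)).
  destruct (Rle_dec 0 K); auto. nra.
Qed.

Lemma Hs_lub d u K : HB d u K -> is_lub (holder_set d u) (Hs d u).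
Proof.
  intros H. unfold Hs, Rsup. apply epsilon_spec.
  destruct (completeness (holder_set d u)) as [m Hm]; [|exists (Rabs (u 1 - u 0) / Rpower (Rabs (1 - 0)) d); exists 0, 1; unfold I; repeat split; lra| exists m; auto].
  exists K. intros r [t1 [t2 [I1 [I2 [Hne ->]]]]].
  pose proof (rp_pos (Rabs (t2 - t1)) d). specialize (H t1 t2 I1 I2 Hne).
  apply (Rmult_le_reg_r (Rpower (Rabs (t2 - t1)) d)); auto.
  unfold Rdiv. rewrite Rmult_assoc, Rinv_l by lra. lra.
Qed.

Lemma Hs_le d u K : HB d u K -> Hs d u <= K.
Proof.
  intros H. destruct (Hs_lub d u K H) as [_ Hl]. apply Hl.
  intros r [t1 [t2 [I1 [I2 [Hne ->]]]]].
  pose proof (rp_pos (Rabs (t2 - t1)) d). specialize (H t1 t2 I1 I2 Hne).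
  apply (Rmult_le_reg_r (Rpower (Rabs (t2 - t1)) d)); auto.
  unfold Rdiv. rewrite Rmult_assoc, Rinv_l by lra. lra.
Qed.

Lemma HB_Hs d u K : HB d u K -> HB d u (Hs d u).
Proof.
  intros H t1 t2 I1 I2 Hne. destruct (Hs_lub d u K H) as [Hu _].
  assert (Hr : holder_set d u (Rabs (u t2 - u t1) / Rpower (Rabs (t2 - t1)) d)) by (exists t1, t2; auto).
  specialize (Hu _ Hr). pose proof (rp_pos (Rabs (t2 - t1)) d).
  apply (Rmult_le_compat_r (Rpower (Rabs (t2 - t1)) d)) in Hu; [|lra].
  unfold Rdiv in Hu. rewrite Rmult_assoc, Rinv_l in Hu by lra. lra.
Qed.

Lemma Hs_nonneg d u K : HB d u K -> 0 <= Hs d u.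
Proof. intros H. apply (HB_K d u). apply (HB_Hs d u K H). Qed.

Lemma HB_ext d u v K : (forall t, I t -> u t = v t) -> HB d u K -> HB d v K.
Proof. intros E H t1 t2 I1 I2 Hne. rewrite <- !E by auto. auto. Qed.

Lemma HB_mono d u K K' : K <= K' -> HB d u K -> HB d u K'.
Proof.
  intros Hk H t1 t2 I1 I2 Hne. specialize (H t1 t2 I1 I2 Hne).
  pose proof (rp_pos (Rabs (t2 - t1)) d). nra.
Qed.

Lemma HB_plus d u v Ku Kv : HB d u Ku -> HB d v Kv -> HB d (fun t => u t + v t) (Ku + Kv).
Proof.
  intros Hu Hv t1 t2 I1 I2 Hne. specialize (Hu t1 t2 I1 I2 Hne). specialize (Hv t1 t2 I1 I2 Hne).
  replace (u t2 + v t2 - (u t1 + v t1)) with ((u t2 - u t1) + (v t2 - v t1)) by ring.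
  eapply Rle_trans; [apply Rabs_triang|]. lra.
Qed.

Lemma HB_opp d u K : HB d u K -> HB d (fun t => - u t) K.
Proof.
  intros Hu t1 t2 I1 I2 Hne. specialize (Hu t1 t2 I1 I2 Hne).
  replace (- u t2 - - u t1) with (- (u t2 - u t1)) by ring. rewrite Rabs_Ropp; auto.
Qed.

Lemma HB_minus d u v Ku Kv : HB d u Ku -> HB d v Kv -> HB d (fun t => u t - v t) (Ku + Kv).
Proof. intros Hu Hv. apply (HB_plus d u (fun t => - v t)); auto. apply HB_opp; auto. Qed.

Lemma HB_mul d u v Ku Kv Bu Bv : HB d u Ku -> HB d v Kv ->
  (forall t, I t -> Rabs (u t) <= Bu) -> (forall t, I t -> Rabs (v t) <= Bv) ->
  HB d (fun t => u t * v t) (Bu * Kv + Ku * Bv).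
Proof.
  intros Hu Hv HBu HBv t1 t2 I1 I2 Hne. specialize (Hu t1 t2 I1 I2 Hne). specialize (Hv t1 t2 I1 I2 Hne).
  replace (u t2 * v t2 - u t1 * v t1) with (u t2 * (v t2 - v t1) + (u t2 - u t1) * v t1) by ring.
  eapply Rle_trans; [apply Rabs_triang|]. rewrite !Rabs_mult.
  pose proof (HBu t2 I2). pose proof (HBv t1 I1).
  pose proof (Rabs_pos (u t2)). pose proof (Rabs_pos (v t1)).
  pose proof (Rabs_pos (v t2 - v t1)). pose proof (Rabs_pos (u t2 - u t1)).
  set (P := Rpower (Rabs (t2 - t1)) d) in *.
  assert (Rabs (u t2) * Rabs (v t2 - v t1) <= Bu * (Kv * P)).
  { apply Rmult_le_compat; auto. }
  assert (Rabs (u t2 - u t1) * Rabs (v t1) <= (Ku * P) * Bv).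
  { apply Rmult_le_compat; auto. }
  nra.
Qed.

Lemma HB_lip d u L : 0 <= d <= 1 -> 0 <= L ->
  (forall t1 t2, I t1 -> I t2 -> Rabs (u t2 - u t1) <= L * Rabs (t2 - t1)) -> HB d u L.
Proof.
  intros Hd HL H t1 t2 I1 I2 Hne. eapply Rle_trans; [apply H; auto|].
  apply Rmult_le_compat_l; auto. apply rp_ge; auto. apply dist_I; auto.
Qed.

Lemma HB_sup d u K : 0 <= d -> HB d u K -> forall t, I t -> Rabs (u t) <= Rabs (u 0) + K.
Proof.
  intros Hd H t It. pose proof (HB_K d u K H) as HK.
  destruct (Req_dec t 0) as [->|Hne]; [lra|].
  assert (I0 : I 0) by (unfold I; lra).
  specialize (H 0 t I0 It (not_eq_sym Hne)).
  pose proof (rp_le1 (Rabs (t - 0)) d (dist_I 0 t I0 It (not_eq_sym Hne)) Hd).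
  replace (u t) with (u 0 + (u t - u 0)) by ring.
  eapply Rle_trans; [apply Rabs_triang|]. nra.
Qed.

Lemma ln_lip a b m : 0 < m -> m <= a -> m <= b -> Rabs (ln a - ln b) <= Rabs (a - b) / m.
Proof.
  intros Hm Ha Hb.
  assert (L : forall x y, m <= x -> m <= y -> ln x - ln y <= Rabs (x - y) / m).
  { intros x y Hx Hy.
    assert (E : ln x - ln y = ln (x / y)).
    { unfold Rdiv. rewrite ln_mult, ln_Rinv by (try apply Rinv_0_lt_compat; lra). ring. }
    rewrite E. pose proof (exp_ineq1_le (ln (x / y))). rewrite exp_ln in H by (apply Rdiv_lt_0_compat; lra).
    assert (x / y - 1 = (x - y) / y) by (field; lra).
    assert ((x - y) / y <= Rabs (x - y) / m).
    { unfold Rdiv. apply Rle_trans with (Rabs (x - y) * / y).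
      - apply Rmult_le_compat_r; [left; apply Rinv_0_lt_compat; lra| apply Rle_abs].
      - apply Rmult_le_compat_l; [apply Rabs_pos|apply Rinv_le_contravar; lra]. }
    lra. }
  apply Rabs_le. split.
  - pose proof (L b a Hb Ha). rewrite <- Rabs_Ropp in H. replace (- (b - a)) with (a - b) in H by ring. lra.
  - apply L; auto.
Qed.

Lemma HB_ln d u K m : 0 < m -> (forall t, I t -> m <= u t) -> HB d u K -> HB d (fun t => ln (u t)) (K / m).
Proof.
  intros Hm Hu H t1 t2 I1 I2 Hne. eapply Rle_trans; [apply (ln_lip _ _ m); auto|].
  specialize (H t1 t2 I1 I2 Hne). unfold Rdiv.
  replace (K * / m * Rpower (Rabs (t2 - t1)) d) with ((K * Rpower (Rabs (t2 - t1)) d) * / m) by ring.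
  apply Rmult_le_compat_r; auto. left; apply Rinv_0_lt_compat; auto.
Qed.

Lemma HB_inv d u K m : 0 < m -> (forall t, I t -> m <= u t) -> HB d u K -> HB d (fun t => / u t) (K / (m * m)).
Proof.
  intros Hm Hu H t1 t2 I1 I2 Hne. specialize (H t1 t2 I1 I2 Hne).
  pose proof (Hu t1 I1). pose proof (Hu t2 I2).
  replace (/ u t2 - / u t1) with ((u t1 - u t2) * / (u t1 * u t2)) by (field; lra).
  rewrite Rabs_mult. rewrite <- Rabs_Ropp. replace (- (u t1 - u t2)) with (u t2 - u t1) by ring.
  rewrite (Rabs_right (/ _)) by (left; apply Rinv_0_lt_compat; nra).
  assert (/ (u t1 * u t2) <= / (m * m)) by (apply Rinv_le_contravar; nra).
  assert (0 < / (m * m)) by (apply Rinv_0_lt_compat; nra).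
  pose proof (Rabs_pos (u t2 - u t1)). pose proof (rp_pos (Rabs (t2 - t1)) d).
  unfold Rdiv. apply Rle_trans with (K * Rpower (Rabs (t2 - t1)) d * / (m * m)).
  - apply Rmult_le_compat; auto. left; apply Rinv_0_lt_compat; nra.
  - nra.
Qed.

Lemma Hs_diff d u v Ku Kv K : HB d u Ku -> HB d v Kv -> HB d (fun t => v t - u t) K ->
  Hs d v <= Hs d u + K.
Proof.
  intros Hu Hv H. apply (Hs_le d v). 
  apply (HB_ext d (fun t => u t + (v t - u t))); [intros; ring|].
  apply HB_plus; auto. apply (HB_Hs d u Ku Hu).
Qed.

Lemma abs_le_inv x a : Rabs x <= a -> - a <= x <= a.
Proof. intros H. pose proof (Rle_abs x). pose proof (Rle_abs (- x)). rewrite Rabs_Ropp in H1. lra. Qed.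

Definition pv d (u : R -> R) := Rabs (ln (u 0)) + Hs d (fun t => ln (u t)).

Lemma HB_const d c : HB d (fun _ => c) 0.
Proof. intros t1 t2 _ _ _. replace (c - c) with 0 by ring. rewrite Rabs_R0. lra. Qed.

Lemma GL d u v m Mu Ku E Ke : 0 < d <= 1 -> 0 < m -> (forall t, I t -> m <= u t <= Mu) -> HB d u Ku ->
  (forall t, I t -> Rabs (v t - u t) <= E) -> HB d (fun t => v t - u t) Ke -> E <= m / 2 ->
  Rabs (pv d v - pv d u) <= 2 * E / m + (E * (Ku / (m * m)) + Ke * / m) * (2 * Mu / m).
Proof.
  intros Hd Hm Hu HBu Hvu HBvu HE.
  assert (I0 : I 0) by (unfold I; lra).
  assert (Hv : forall t, I t -> m / 2 <= v t).
  { intros t It. specialize (Hvu t It). specialize (Hu t It). apply abs_le_inv in Hvu. lra. }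
  assert (HBv : HB d v (Ku + Ke)).
  { apply (HB_ext d (fun t => u t + (v t - u t))); [intros; ring|]. apply HB_plus; auto. }
  assert (HBlu : HB d (fun t => ln (u t)) (Ku / m)) by (apply HB_ln; auto; intros t It; apply Hu; auto).
  assert (HBlv : HB d (fun t => ln (v t)) ((Ku + Ke) / (m / 2))) by (apply HB_ln; auto; lra).
  assert (Hmu : m <= Mu) by (pose proof (Hu 0 I0); lra).
  set (Kw := E * (Ku / (m * m)) + Ke * / m).
  assert (HBw : HB d (fun t => v t / u t) Kw).
  { apply (HB_ext d (fun t => 1 + (v t - u t) * / u t)).
    { intros t It. pose proof (Hu t It). field. lra. }
    replace Kw with (0 + Kw) by ring. apply HB_plus; [apply HB_const|].
    apply HB_mul; auto.
    - apply HB_inv; auto. intros t It; apply Hu; auto.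
    - intros t It. pose proof (Hu t It). rewrite Rabs_right by (left; apply Rinv_0_lt_compat; lra).
      apply Rinv_le_contravar; lra. }
  assert (Hq : forall t, I t -> (m / 2) / Mu <= v t / u t).
  { intros t It. pose proof (Hu t It). pose proof (Hv t It). unfold Rdiv.
    apply Rmult_le_compat; try lra. left; apply Rinv_0_lt_compat; lra. apply Rinv_le_contravar; lra. }
  assert (Hq0 : 0 < (m / 2) / Mu) by (apply Rdiv_lt_0_compat; lra).
  assert (HBlq : HB d (fun t => ln (v t) - ln (u t)) (Kw / ((m / 2) / Mu))).
  { apply (HB_ext d (fun t => ln (v t / u t))).
    { intros t It. pose proof (Hu t It). pose proof (Hv t It). unfold Rdiv.
      rewrite ln_mult, ln_Rinv by (try apply Rinv_0_lt_compat; lra). ring. }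
    apply HB_ln; auto. }
  replace (Kw / ((m / 2) / Mu)) with (Kw * (2 * Mu / m)) in HBlq by (field; lra).
  assert (A1 : Hs d (fun t => ln (v t)) <= Hs d (fun t => ln (u t)) + Kw * (2 * Mu / m)).
  { apply (Hs_diff d _ _ _ _ _ HBlu HBlv HBlq). }
  assert (A2 : Hs d (fun t => ln (u t)) <= Hs d (fun t => ln (v t)) + Kw * (2 * Mu / m)).
  { apply (Hs_diff d _ _ _ _ _ HBlv HBlu).
    apply (HB_ext d (fun t => - (ln (v t) - ln (u t)))); [intros; ring|]. apply HB_opp; auto. }
  assert (A3 : Rabs (ln (v 0) - ln (u 0)) <= 2 * E / m).
  { eapply Rle_trans; [apply (ln_lip _ _ (m/2)); try lra; [apply Hv; auto| pose proof (Hu 0 I0); lra]|].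
    specialize (Hvu 0 I0). unfold Rdiv. 
    replace (2 * E * / m) with (E * / (m / 2)) by (field; lra).
    apply Rmult_le_compat_r; auto. left; apply Rinv_0_lt_compat; lra. }
  unfold pv. fold Kw.
  pose proof (Rabs_triang_inv (ln (v 0)) (ln (u 0))).
  pose proof (Rabs_triang_inv (ln (u 0)) (ln (v 0))).
  rewrite <- Rabs_Ropp in A3. replace (- (ln (v 0) - ln (u 0))) with (ln (u 0) - ln (v 0)) in A3 by ring.
  assert (Rabs (ln (v 0) - ln (u 0)) <= 2 * E / m) by (rewrite <- Rabs_Ropp; replace (- (ln (v 0) - ln (u 0))) with (ln (u 0) - ln (v 0)) by ring; auto).
  apply Rabs_le. lra.
Qed.

Definition C1 f := (forall x, I x -> hd2 f x (derI f x)) /\ (forall x, I x -> relcont (derI f) x).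

Lemma Ck1_C1 f : is_Ck 1 f -> C1 f.
Proof.
  intros [H1 H2]. split.
  - intros x Ix. apply hd_hd2. apply (H1 0%nat); auto.
  - intros x Ix. exact (H2 x Ix).
Qed.

Lemma Ck3_C1 f : is_Ck 3 f -> C1 f /\ C1 (derI f) /\ C1 (derI (derI f)).
Proof.
  intros [H1 H2].
  assert (D0 : forall x, I x -> hd2 f x (derI f x)) by (intros; apply hd_hd2; apply (H1 0%nat); auto).
  assert (D1 : forall x, I x -> hd2 (derI f) x (derI (derI f) x)) by (intros; apply hd_hd2; apply (H1 1%nat); auto).
  assert (D2 : forall x, I x -> hd2 (derI (derI f)) x (derI (derI (derI f)) x)) by (intros; apply hd_hd2; apply (H1 2%nat); auto).
  split; [|split]; split; auto.
  all: intros x Ix.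
  all: first [exact (hd2_cont _ _ _ (D1 x Ix)) | exact (hd2_cont _ _ _ (D2 x Ix)) | exact (H2 x Ix)].
Qed.

Lemma relcont_opp u x : relcont u x -> relcont (fun y => - u y) x.
Proof.
  intros H eps Heps. destruct (H eps Heps) as [d [Hd Hy]]. exists d; split; auto.
  intros y Iy Hyx. replace (- u y - - u x) with (- (u y - u x)) by ring. rewrite Rabs_Ropp; auto.
Qed.

Lemma pos_deriv f g : C1 f -> C1 g -> inv_on_I f g -> f 0 = 0 -> f 1 = 1 ->
  forall x, I x -> 0 < derI f x.
Proof.
  intros [Df Cf] [Dg Cg] [Mf [Mg Hfg]] H0 H1.
  assert (Hnz : forall x, I x -> derI f x <> 0).
  { intros x Ix Hz.
    assert (A := hd2_chain f g x _ _ Mf Ix (Df x Ix) (Dg (f x) (Mf x Ix))).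
    assert (B : hd2 (fun y => g (f y)) x 1).
    { apply (hd2_ext (fun y => y)); auto. intros y Iy. symmetry; apply Hfg; auto. apply hd2_id. }
    assert (E := hd2_unique _ _ _ _ Ix A B). rewrite Hz in E. lra. }
  intros x Ix. destruct (Rlt_dec 0 (derI f x)) as [|Hn]; auto. exfalso.
  assert (Hneg : derI f x < 0) by (specialize (Hnz x Ix); lra).
  destruct (classic (exists x1, I x1 /\ 0 < derI f x1)) as [[x1 [I1 Hp]]|Hno].
  - destruct (Rtotal_order x x1) as [Hlt|[Heq|Hgt]].
    + destruct (rivt (derI f) Cf x x1 Ix I1 Hlt Hneg Hp) as [c [Ic Hc]]. apply (Hnz c Ic Hc).
    + subst; lra.
    + destruct (rivt (fun y => - derI f y) (fun z Iz => relcont_opp _ _ (Cf z Iz)) x1 x I1 Ix Hgt) as [c [Ic Hc]]; try lra.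
      apply (Hnz c Ic). lra.
  - assert (I0 : I 0) by (unfold I; lra). assert (I1 : I 1) by (unfold I; lra).
    destruct (rmvt f (derI f) 0 1 Df I0 I1 ltac:(lra)) as [c [Hc E]].
    assert (Ic : I c) by (unfold I; lra).
    assert (derI f c <= 0) by (destruct (Rle_dec (derI f c) 0); auto; exfalso; apply Hno; exists c; split; auto; lra).
    rewrite H0, H1 in E. lra.
Qed.

Lemma Diff1p_data f : Diff1p f -> C1 f /\ maps_I f /\ f 0 = 0 /\
  (exists g, inv_on_I f g /\ C1 g) /\ (forall x, I x -> 0 < derI f x).
Proof.
  intros [[Hf [g [Hinv Hg]]] [H0 H1]].
  apply Ck1_C1 in Hf. apply Ck1_C1 in Hg.
  split; auto. split; [apply Hinv|]. split; auto. split; [exists g; auto|].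
  apply (pos_deriv f g); auto.
Qed.

Lemma Diff03_data k : Diff03 k -> C1 k /\ C1 (derI k) /\ C1 (derI (derI k)) /\ maps_I k /\
  (forall x, I x -> 0 < derI k x) /\ derI k 0 = 1.
Proof.
  intros [[Hk [g [Hinv Hg]]] [H0 [H1 [D0 D1]]]].
  destruct (Ck3_C1 k Hk) as [A [B C]]. destruct (Ck3_C1 g Hg) as [A' _].
  split; [exact A|]. split; [exact B|]. split; [exact C|]. split; [apply Hinv|]. split; [|exact D0].
  apply (pos_deriv k g); auto.
Qed.

Lemma Diff1d_data d f : Diff1d d f -> C1 f /\ maps_I f /\ f 0 = 0 /\
  (exists g, inv_on_I f g /\ C1 g) /\ (forall x, I x -> 0 < derI f x) /\ exists K, HB d (derI f) K.
Proof.
  intros [Hp [_ [_ [K HK]]]]. destruct (Diff1p_data f Hp) as [A [B [C [D E]]]].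
  repeat (split; auto). exists K. exact HK.
Qed.

Lemma fdata d f : 0 <= d -> Diff1d d f -> exists m Mf Kf, 0 < m /\ 0 <= Kf /\
  (forall t, I t -> m <= derI f t <= Mf) /\ HB d (derI f) Kf.
Proof.
  intros Hd Hf. destruct (Diff1d_data d f Hf) as [[Df Cf] [_ [_ [_ [Hpos [K HK]]]]]].
  destruct (rmin (derI f) Cf) as [x0 [Ix0 Hx0]].
  exists (derI f x0), (Rabs (derI f 0) + K), K.
  split; [apply Hpos; auto|]. split; [apply (HB_K d _ _ HK)|]. split; auto.
  intros t It. split; auto. pose proof (HB_sup d _ _ Hd HK t It). pose proof (Rle_abs (derI f t)). lra.
Qed.

Lemma normfacts d f g : 0 <= d -> Diff1d d f -> Diff1d d g ->
  (forall t, I t -> Rabs (derI g t - derI f t) <= norm1d d (fun x => g x - f x)) /\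
  HB d (fun t => derI g t - derI f t) (norm1d d (fun x => g x - f x)) /\
  (forall t, I t -> Rabs (g t - f t) <= norm1d d (fun x => g x - f x)) /\
  0 <= norm1d d (fun x => g x - f x).
Proof.
  intros Hd Hf Hg.
  destruct (Diff1d_data d f Hf) as [[Df Cf] [_ [f0 [_ [_ [Kf HKf]]]]]].
  destruct (Diff1d_data d g Hg) as [[Dg Cg] [_ [g0 [_ [_ [Kg HKg]]]]]].
  set (D := derI (fun x => g x - f x)).
  assert (HD : forall t, I t -> D t = derI g t - derI f t).
  { intros t It. apply hd2_derI; auto. apply hd2_minus; auto. }
  assert (HBD : HB d D (Kg + Kf)).
  { apply (HB_ext d (fun t => derI g t - derI f t)); [intros; symmetry; auto|]. apply HB_minus; auto. }
  pose proof (HB_Hs d D _ HBD) as HBD'. pose proof (Hs_nonneg d D _ HBD) as Hs0.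
  assert (EN : norm1d d (fun x => g x - f x) = Rabs (D 0) + Hs d D) by reflexivity.
  rewrite EN. pose proof (Rabs_pos (D 0)).
  assert (Hb : forall t, I t -> Rabs (derI g t - derI f t) <= Rabs (D 0) + Hs d D).
  { intros t It. rewrite <- HD by auto. apply (HB_sup d D _ Hd HBD'); auto. }
  split; auto. split.
  { apply (HB_ext d D); auto. apply (HB_mono d D (Hs d D)); auto. lra. }
  split; [|lra].
  intros t It. assert (I0 : I 0) by (unfold I; lra).
  pose proof (rlip (fun x => g x - f x) (fun t => derI g t - derI f t) _
     (fun x Ix => hd2_minus _ _ _ _ _ (Dg x Ix) (Df x Ix)) Hb 0 t I0 It) as L.
  simpl in L. rewrite f0, g0 in L. replace (g t - f t - (0 - 0)) with (g t - f t) in L by ring.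
  eapply Rle_trans; [apply L|]. replace (t - 0) with t by ring.
  destruct It. rewrite (Rabs_right t) by lra.
  rewrite <- (Rmult_1_r (Rabs (D 0) + Hs d D)) at 2. apply Rmult_le_compat_l; lra.
Qed.

Lemma p_cont d : 0 < d <= 1 -> cont_Diff1d d (p_delta d).
Proof.
  intros Hd f Hf eps Heps.
  destruct (fdata d f ltac:(lra) Hf) as [m [Mf [Kf [Hm [HKf0 [Hb HKf]]]]]].
  assert (I0 : I 0) by (unfold I; lra).
  assert (HMf : m <= Mf) by (pose proof (Hb 0 I0); lra).
  set (C := 2 / m + (Kf / (m * m) + / m) * (2 * Mf / m)).
  assert (HC : 0 < C).
  { unfold C. assert (0 < 2 / m) by (apply Rdiv_lt_0_compat; lra).
    assert (0 <= Kf / (m * m)) by (unfold Rdiv; apply Rmult_le_pos; [lra|left; apply Rinv_0_lt_compat; nra]).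
    assert (0 < / m) by (apply Rinv_0_lt_compat; lra).
    assert (0 < 2 * Mf / m) by (apply Rdiv_lt_0_compat; lra). nra. }
  exists (Rmin (m / 2) (eps / (C + 1))). split; [apply Rmin_case; [lra|apply Rdiv_lt_0_compat; lra]|].
  intros g Hg HN. destruct (normfacts d f g ltac:(lra) Hf Hg) as [A [B [_ N0]]].
  set (N := norm1d d (fun x => g x - f x)) in *.
  assert (N1 : N <= m / 2) by (left; eapply Rlt_le_trans; [apply HN|apply Rmin_l]).
  assert (N2 : N < eps / (C + 1)) by (eapply Rlt_le_trans; [apply HN|apply Rmin_r]).
  pose proof (GL d (derI f) (derI g) m Mf Kf N N Hd Hm Hb HKf A B N1) as G.
  change (Rabs (pv d (derI g) - pv d (derI f)) < eps).
  eapply Rle_lt_trans; [apply G|].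
  replace (2 * N / m + (N * (Kf / (m * m)) + N * / m) * (2 * Mf / m)) with (N * C) by (unfold C; field; lra).
  apply Rle_lt_trans with (eps / (C + 1) * C).
  - apply Rmult_le_compat_r; lra.
  - apply (Rmult_lt_reg_r (C + 1)); [lra|]. unfold Rdiv.
    replace (eps * / (C + 1) * C * (C + 1)) with (eps * C) by (field; lra). nra.
Qed.

Lemma holder_set_ext d u v : (forall t, I t -> u t = v t) -> holder_set d u = holder_set d v.
Proof.
  intros E. apply functional_extensionality. intros r. apply propositional_extensionality.
  split; intros [t1 [t2 [I1 [I2 [Hne Hr]]]]]; exists t1, t2; (split; [auto|split;[auto|split;[auto|]]]);
  rewrite Hr; rewrite !E by auto; reflexivity.
Qed.

Lemma pv_ext d u v : (forall t, I t -> u t = v t) -> pv d u = pv d v.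
Proof.
  intros E. unfold pv, Hs. assert (I0 : I 0) by (unfold I; lra). rewrite (E 0 I0).
  rewrite (holder_set_ext d (fun t => ln (u t)) (fun t => ln (v t))); auto.
  intros t It; rewrite E; auto.
Qed.

Definition KG k := C1 k /\ C1 (derI k) /\ C1 (derI (derI k)) /\ maps_I k /\ (forall x, I x -> 0 < derI k x).

Definition lipI u L := forall t1 t2, I t1 -> I t2 -> Rabs (u t2 - u t1) <= L * Rabs (t2 - t1).

Lemma kdata k : KG k -> exists mk M1 M2 M3, 0 < mk /\ 0 <= M2 /\ 0 <= M3 /\
  (forall x, I x -> mk <= derI k x <= M1) /\
  (forall x, I x -> Rabs (derI (derI k) x) <= M2) /\
  (forall x, I x -> Rabs (derI (derI (derI k)) x) <= M3) /\
  lipI (derI k) M2 /\ lipI (derI (derI k)) M3.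
Proof.
  intros [[D0 C0] [[D1 C1'] [[D2 C2] [Mk Hpos]]]].
  destruct (rmin (derI k) C0) as [x0 [Ix0 Hx0]].
  destruct (rbound (derI k) C0) as [M1 HM1].
  destruct (rbound (derI (derI k)) C1') as [M2 HM2].
  destruct (rbound (derI (derI (derI k))) C2) as [M3 HM3].
  assert (I0 : I 0) by (unfold I; lra).
  exists (derI k x0), M1, M2, M3. split; [apply Hpos; auto|].
  split; [pose proof (HM2 0 I0); pose proof (Rabs_pos (derI (derI k) 0)); lra|].
  split; [pose proof (HM3 0 I0); pose proof (Rabs_pos (derI (derI (derI k)) 0)); lra|].
  split. { intros x Ix. split; auto. pose proof (HM1 x Ix). pose proof (Rle_abs (derI k x)). lra. }
  split; auto. split; auto. split.
  - intros t1 t2 I1 I2. apply (rlip _ (derI (derI k))); auto.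
  - intros t1 t2 I1 I2. apply (rlip _ (derI (derI (derI k)))); auto.
Qed.

Lemma comp_hd2 u F F' x : maps_I u -> I x -> hd2 u x (derI u x) -> (forall y, I y -> hd2 F y (F' y)) ->
  hd2 (fun y => F (u y)) x (F' (u x) * derI u x).
Proof. intros Mu Ix Hu HF. apply hd2_chain; auto. Qed.

Lemma comp_der k g : KG k -> C1 g -> maps_I g -> forall t, I t ->
  hd2 (fun x => k (g x)) t (derI k (g t) * derI g t) /\
  derI (fun x => k (g x)) t = derI k (g t) * derI g t.
Proof.
  intros [[D0 _] _] [Dg _] Mg t It.
  assert (H : hd2 (fun x => k (g x)) t (derI k (g t) * derI g t)) by (apply comp_hd2; auto).
  split; auto. apply hd2_derI; auto.
Qed.

Lemma lip_HB d u L : 0 < d <= 1 -> 0 <= L -> lipI u L -> HB d u L.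
Proof. intros Hd HL H. apply HB_lip; auto; lra. Qed.

Lemma lip_comp u L g Lg : lipI u L -> 0 <= L -> maps_I g -> lipI g Lg -> lipI (fun t => u (g t)) (L * Lg).
Proof.
  intros Hu HL Mg Hg t1 t2 I1 I2. eapply Rle_trans; [apply Hu; auto|].
  rewrite Rmult_assoc. apply Rmult_le_compat_l; auto.
Qed.

Lemma g_lip d g Mg : Diff1d d g -> (forall t, I t -> derI g t <= Mg) -> lipI g Mg.
Proof.
  intros Hg HM. destruct (Diff1d_data d g Hg) as [[Dg _] [_ [_ [_ [Hpos _]]]]].
  intros t1 t2 I1 I2. apply (rlip g (derI g)); auto.
  intros x Ix. pose proof (Hpos x Ix). pose proof (HM x Ix). rewrite Rabs_right; lra.
Qed.

Lemma comp_data d k g : 0 < d <= 1 -> KG k -> Diff1d d g -> exists m Mu Ku, 0 < m /\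
  (forall t, I t -> m <= derI (fun x => k (g x)) t <= Mu) /\ HB d (derI (fun x => k (g x))) Ku.
Proof.
  intros Hd Hk Hg.
  destruct (kdata k Hk) as [mk [M1 [M2 [M3 [Hmk [HM2 [HM3 [Hk1 [Hk2 [Hk3 [L2 L3]]]]]]]]]]].
  destruct (fdata d g ltac:(lra) Hg) as [mg [Mg [Kg [Hmg [HKg0 [Hbg HKg]]]]]].
  destruct (Diff1d_data d g Hg) as [Cg [Mgi _]].
  exists (mk * mg), (M1 * Mg), (M1 * Kg + (M2 * Mg) * Mg). split; [nra|]. split.
  - intros t It. rewrite (proj2 (comp_der k g Hk Cg Mgi t It)).
    pose proof (Hk1 (g t) (Mgi t It)). pose proof (Hbg t It). split; apply Rmult_le_compat; nra.
  - apply (HB_ext d (fun t => derI k (g t) * derI g t)).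
    { intros t It. symmetry. apply (proj2 (comp_der k g Hk Cg Mgi t It)). }
    apply HB_mul; auto.
    + assert (I0 : I 0) by (unfold I; lra). pose proof (Hbg 0 I0).
      apply lip_HB; auto; [nra|]. apply lip_comp; auto. apply (g_lip d); auto. intros; apply Hbg; auto.
    + intros t It. pose proof (Hk1 (g t) (Mgi t It)). rewrite Rabs_right; lra.
    + intros t It. pose proof (Hbg t It). rewrite Rabs_right; lra.
Qed.

Lemma pk_cont d k f : 0 < d <= 1 -> KG k -> Diff1d d f -> forall eps, 0 < eps -> exists eta, 0 < eta /\
  forall g, Diff1d d g -> norm1d d (fun x => g x - f x) < eta ->
  Rabs (p_delta d (fun x => k (g x)) - p_delta d (fun x => k (f x))) < eps.
Proof.
  intros Hd Hk Hf eps Heps.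
  destruct (kdata k Hk) as [mk [M1 [M2 [M3 [Hmk [HM2 [HM3 [Hk1 [Hk2 [Hk3 [L2 L3]]]]]]]]]]].
  destruct (fdata d f ltac:(lra) Hf) as [mf [Mf [Kf [Hmf [HKf0 [Hbf HKf]]]]]].
  destruct (Diff1d_data d f Hf) as [C1f [Mfi _]].
  assert (I0 : I 0) by (unfold I; lra).
  assert (HMf : mf <= Mf) by (pose proof (Hbf 0 I0); lra).
  assert (HM1 : mk <= M1) by (pose proof (Hk1 0 I0); lra).
  set (m := mk * mf). set (Mu := M1 * Mf). set (Ku := M1 * Kf + M2 * Mf * Mf).
  set (Mg := Mf + 1).
  set (a := M1 + M2 * Mf).
  set (b := (M1 + M2 * Mg) + (M2 * Kf + (M2 + M3 * Mf) * Mf)).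
  assert (Hm : 0 < m) by (unfold m; nra).
  assert (Ha : 0 < a) by (unfold a; nra).
  assert (Hb : 0 <= b) by (unfold b, Mg; nra).
  set (C := 2 * a / m + (a * (Ku / (m * m)) + b * / m) * (2 * Mu / m)).
  assert (HC : 0 <= C).
  { unfold C. assert (0 < / m) by (apply Rinv_0_lt_compat; lra).
    assert (0 <= Ku) by (unfold Ku; nra).
    assert (0 <= Ku / (m * m)) by (unfold Rdiv; apply Rmult_le_pos; [lra|left; apply Rinv_0_lt_compat; nra]).
    assert (0 < Mu) by (unfold Mu; nra).
    unfold Rdiv. assert (0 <= 2 * a * / m) by nra. assert (0 <= 2 * Mu * / m) by nra.
    assert (0 <= a * (Ku * / (m * m))) by nra. assert (0 <= b * / m) by nra. nra. }
  set (eta := Rmin 1 (Rmin (m / (2 * a)) (eps / (C + 1)))).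
  exists eta. split.
  { unfold eta. repeat apply Rmin_case; try lra; apply Rdiv_lt_0_compat; lra. }
  intros g Hg HN.
  destruct (normfacts d f g ltac:(lra) Hf Hg) as [Ne [NHB [Ngf N0]]].
  set (N := norm1d d (fun x => g x - f x)) in *.
  assert (N1 : N <= 1) by (left; eapply Rlt_le_trans; [apply HN|apply Rmin_l]).
  assert (N2 : N <= m / (2 * a)) by (left; eapply Rlt_le_trans; [apply HN|]; unfold eta; eapply Rle_trans; [apply Rmin_r|apply Rmin_l]).
  assert (N3 : N < eps / (C + 1)) by (eapply Rlt_le_trans; [apply HN|]; unfold eta; eapply Rle_trans; [apply Rmin_r|apply Rmin_r]).
  destruct (Diff1d_data d g Hg) as [C1g [Mgi [_ [_ [Hgpos _]]]]].
  assert (Hbg : forall t, I t -> derI g t <= Mg).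
  { intros t It. specialize (Ne t It). apply abs_le_inv in Ne. pose proof (Hbf t It). unfold Mg; lra. }
  set (u := fun t => derI k (f t) * derI f t).
  set (v := fun t => derI k (g t) * derI g t).
  assert (Eu : forall t, I t -> derI (fun x => k (f x)) t = u t) by (intros; apply (comp_der k f Hk C1f Mfi); auto).
  assert (Ev : forall t, I t -> derI (fun x => k (g x)) t = v t) by (intros; apply (comp_der k g Hk C1g Mgi); auto).
  change (Rabs (pv d (derI (fun x => k (g x))) - pv d (derI (fun x => k (f x)))) < eps).
  rewrite (pv_ext d _ _ Eu), (pv_ext d _ _ Ev).
  assert (Hu : forall t, I t -> m <= u t <= Mu).
  { intros t It. unfold u, m, Mu. pose proof (Hk1 (f t) (Mfi t It)). pose proof (Hbf t It).
    split; apply Rmult_le_compat; nra. }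
  assert (Hlf : lipI f Mf) by (apply (g_lip d); auto; intros; apply Hbf; auto).
  assert (Hlg : lipI g Mg) by (apply (g_lip d); auto).
  assert (HBu : HB d u Ku).
  { unfold u, Ku. apply HB_mul; auto.
    - apply lip_HB; auto; [nra|]. apply lip_comp; auto.
    - intros t It. pose proof (Hk1 (f t) (Mfi t It)). rewrite Rabs_right; lra.
    - intros t It. pose proof (Hbf t It). rewrite Rabs_right; lra. }
  assert (Hw : forall t, I t -> Rabs (derI k (g t) - derI k (f t)) <= M2 * N).
  { intros t It. eapply Rle_trans; [apply L2; auto|]. apply Rmult_le_compat_l; auto. }
  set (w' := fun t => derI (derI k) (g t) * derI g t - derI (derI k) (f t) * derI f t).
  assert (Dw : forall t, I t -> hd2 (fun y => derI k (g y) - derI k (f y)) t (w' t)).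
  { intros t It. unfold w'. destruct Hk as [_ [[Dk1 _] _]]. destruct C1g as [Dg _]. destruct C1f as [Df _].
    apply hd2_minus; apply comp_hd2; auto. }
  assert (Bw' : forall t, I t -> Rabs (w' t) <= N * (M2 + M3 * Mf)).
  { intros t It. unfold w'.
    replace (derI (derI k) (g t) * derI g t - derI (derI k) (f t) * derI f t) with
      (derI (derI k) (g t) * (derI g t - derI f t) + (derI (derI k) (g t) - derI (derI k) (f t)) * derI f t) by ring.
    eapply Rle_trans; [apply Rabs_triang|]. rewrite !Rabs_mult.
    pose proof (Hk2 (g t) (Mgi t It)). pose proof (Ne t It).
    assert (Rabs (derI (derI k) (g t) - derI (derI k) (f t)) <= M3 * N).
    { eapply Rle_trans; [apply L3; auto|]. apply Rmult_le_compat_l; auto. }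
    pose proof (Hbf t It). pose proof (Hmf). rewrite (Rabs_right (derI f t)) by lra.
    pose proof (Rabs_pos (derI (derI k) (g t))). pose proof (Rabs_pos (derI g t - derI f t)).
    pose proof (Rabs_pos (derI (derI k) (g t) - derI (derI k) (f t))).
    assert (Rabs (derI (derI k) (g t)) * Rabs (derI g t - derI f t) <= M2 * N) by (apply Rmult_le_compat; auto).
    assert (Rabs (derI (derI k) (g t) - derI (derI k) (f t)) * derI f t <= (M3 * N) * Mf) by (apply Rmult_le_compat; lra).
    nra. }
  assert (Lw : lipI (fun y => derI k (g y) - derI k (f y)) (N * (M2 + M3 * Mf))).
  { intros t1 t2 I1 I2. exact (rlip (fun y => derI k (g y) - derI k (f y)) w' _ Dw Bw' t1 t2 I1 I2). }
  assert (HE : forall t, I t -> Rabs (v t - u t) <= N * a).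
  { intros t It. unfold u, v, a.
    replace (derI k (g t) * derI g t - derI k (f t) * derI f t) with
      (derI k (g t) * (derI g t - derI f t) + (derI k (g t) - derI k (f t)) * derI f t) by ring.
    eapply Rle_trans; [apply Rabs_triang|]. rewrite !Rabs_mult.
    pose proof (Hk1 (g t) (Mgi t It)). pose proof (Ne t It). pose proof (Hw t It). pose proof (Hbf t It).
    rewrite (Rabs_right (derI k (g t))) by lra. rewrite (Rabs_right (derI f t)) by lra.
    pose proof (Rabs_pos (derI g t - derI f t)). pose proof (Rabs_pos (derI k (g t) - derI k (f t))).
    assert (derI k (g t) * Rabs (derI g t - derI f t) <= M1 * N) by (apply Rmult_le_compat; lra).
    assert (Rabs (derI k (g t) - derI k (f t)) * derI f t <= M2 * N * Mf) by (apply Rmult_le_compat; lra).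
    nra. }
  assert (HKe : HB d (fun t => v t - u t) (N * b)).
  { apply (HB_ext d (fun t => derI k (g t) * (derI g t - derI f t) + (derI k (g t) - derI k (f t)) * derI f t)).
    { intros t It. unfold u, v. ring. }
    replace (N * b) with ((M1 * N + (M2 * Mg) * N) + ((M2 * N) * Kf + (N * (M2 + M3 * Mf)) * Mf)) by (unfold b; ring).
    apply HB_plus.
    - apply HB_mul; auto.
      + apply lip_HB; auto; [unfold Mg; nra|]. apply lip_comp; auto.
      + intros t It. pose proof (Hk1 (g t) (Mgi t It)). rewrite Rabs_right; lra.
    - apply HB_mul; auto.
      + apply lip_HB; auto. apply Rmult_le_pos; [lra|]. assert (0 <= M3 * Mf) by (apply Rmult_le_pos; lra). lra.
      + intros t It. pose proof (Hbf t It). rewrite Rabs_right; lra. }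
  assert (HEm : N * a <= m / 2).
  { apply (Rmult_le_compat_r a) in N2; [|lra]. unfold Rdiv in N2 |- *.
    replace (m * / (2 * a) * a) with (m * / 2) in N2 by (field; lra). lra. }
  pose proof (GL d u v m Mu Ku (N * a) (N * b) Hd Hm Hu HBu HE HKe HEm) as G.
  eapply Rle_lt_trans; [apply G|].
  replace (2 * (N * a) / m + (N * a * (Ku / (m * m)) + N * b * / m) * (2 * Mu / m)) with (N * C) by (unfold C; field; lra).
  apply Rle_lt_trans with (eps / (C + 1) * C).
  - apply Rmult_le_compat_r; lra.
  - apply (Rmult_lt_reg_r (C + 1)); [lra|]. unfold Rdiv.
    replace (eps * / (C + 1) * C * (C + 1)) with (eps * C) by (field; lra). nra.
Qed.

Definition zr (Q : Z) : list Z := map (fun j => (Z.of_nat j - Q)%Z) (seq 0 (Z.to_nat (2 * Q + 1))).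

Fixpoint allL (Q : Z) (n : nat) : list (list Z) :=
  match n with
  | O => nil :: nil
  | S n => flat_map (fun z => map (cons z) (allL Q n)) (zr Q)
  end.

Lemma zr_in Q z : (- Q <= z <= Q)%Z -> In z (zr Q).
Proof.
  intros H. unfold zr. apply in_map_iff. exists (Z.to_nat (z + Q)). split.
  - rewrite Z2Nat.id; lia.
  - apply in_seq. lia.
Qed.

Lemma allL_in Q l : (forall z, In z l -> (- Q <= z <= Q)%Z) -> In l (allL Q (length l)).
Proof.
  induction l as [|a l IH]; intros H; simpl; [auto|].
  apply in_flat_map. exists a. split; [apply zr_in; apply H; simpl; auto|].
  apply in_map. apply IH. intros z Hz; apply H; simpl; auto.
Qed.

Lemma map_eq_pt {A B} (F G : A -> B) l : map F l = map G l -> forall i, In i l -> F i = G i.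
Proof.
  induction l as [|a l IH]; simpl; intros E i Hi; [contradiction|].
  injection E as E1 E2. destruct Hi as [->|Hi]; auto.
Qed.

Lemma cover {T} (P : T -> Prop) (pat : T -> list Z) (LP : list (list Z)) :
  exists L, forall k, P k -> In (pat k) LP -> exists k', In k' L /\ P k' /\ pat k' = pat k.
Proof.
  induction LP as [|pi LP [L HL]].
  - exists nil. intros k _ [].
  - destruct (classic (exists k0, P k0 /\ pat k0 = pi)) as [[k0 [Pk0 Ek0]]|Hno].
    + exists (k0 :: L). intros k Pk [Hin|Hin].
      * exists k0. split; [left; auto|]. split; auto. congruence.
      * destruct (HL k Pk Hin) as [k' [A B]]. exists k'. split; [right; auto|auto].
    + exists L. intros k Pk [Hin|Hin].
      * exfalso. apply Hno. exists k; auto.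
      * apply HL; auto.
Qed.

Lemma min_eta {T} (P : T -> Prop) (Z : T -> (R -> R) -> Prop) (D : (R -> R) -> R) (L : list T) :
  (forall k, In k L -> P k -> exists eta, 0 < eta /\ forall g, D g < eta -> Z k g) ->
  exists eta, 0 < eta /\ forall k, In k L -> P k -> forall g, D g < eta -> Z k g.
Proof.
  induction L as [|a L IH]; intros H.
  - exists 1. split; [lra|]. intros k [].
  - destruct IH as [e1 [He1 H1]]. { intros k Hk Pk. apply H; simpl; auto. }
    destruct (classic (P a)) as [Pa|nPa].
    + destruct (H a (or_introl eq_refl) Pa) as [e2 [He2 H2]].
      exists (Rmin e1 e2). split; [apply Rmin_case; lra|].
      intros k [<-|Hk] Pk g Hg.
      * apply H2. eapply Rlt_le_trans; [apply Hg|apply Rmin_r].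
      * apply H1; auto. eapply Rlt_le_trans; [apply Hg|apply Rmin_l].
    + exists e1. split; auto. intros k [<-|Hk] Pk g Hg; [contradiction|]. apply H1; auto.
Qed.

Lemma Rinf_glb S : (exists x, S x) -> (exists b, forall r, S r -> b <= r) -> is_glb S (Rinf S).
Proof.
  intros [x Hx] [b Hb]. unfold Rinf. apply epsilon_spec.
  destruct (completeness (fun y => S (- y))) as [m [Hm1 Hm2]].
  - exists (- b). intros y Hy. specialize (Hb _ Hy). lra.
  - exists (- x). rewrite Ropp_involutive. auto.
  - exists (- m). split.
    + intros r Hr. assert (- r <= m) by (apply Hm1; rewrite Ropp_involutive; auto). lra.
    + intros b' Hb'. assert (m <= - b') by (apply Hm2; intros y Hy; specialize (Hb' _ Hy); lra). lra.
Qed.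

Lemma glb_approx S m : is_glb S m -> forall eps, 0 < eps -> exists r, S r /\ r < m + eps.
Proof.
  intros [H1 H2] eps Heps. destruct (classic (exists r, S r /\ r < m + eps)) as [H|H]; auto.
  exfalso. assert (m + eps <= m); [|lra]. apply H2. intros r Hr.
  destruct (Rlt_dec r (m + eps)); [exfalso; apply H; exists r; auto|lra].
Qed.

Lemma Rsup_le S M : (exists x, S x) -> (forall r, S r -> r <= M) -> Rsup S <= M.
Proof.
  intros Hne Hb. assert (H : is_lub S (Rsup S)).
  { unfold Rsup. apply epsilon_spec. destruct (completeness S) as [m Hm]; auto.
    exists M; intros r Hr; auto. exists m; auto. }
  apply H. intros r Hr; auto.
Qed.

Lemma grid_near (Ng : nat) t : (0 < Ng)%nat -> I t -> exists i, (i <= Ng)%nat /\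
  Rabs (t - INR i / INR Ng) <= / INR Ng.
Proof.
  intros HN It. pose proof (lt_0_INR _ HN) as HNr. destruct It as [t0 t1].
  set (z := (up (t * INR Ng) - 1)%Z).
  destruct (archimed (t * INR Ng)) as [A1 A2].
  assert (Hz1 : IZR z <= t * INR Ng) by (unfold z; rewrite minus_IZR; simpl; lra).
  assert (Hz2 : t * INR Ng < IZR z + 1) by (unfold z; rewrite minus_IZR; simpl; lra).
  assert (Hz0' : (-1 < z)%Z) by (apply lt_IZR; nra).
  assert (Hz0 : (0 <= z)%Z) by lia.
  exists (Z.to_nat z).
  assert (Ei : INR (Z.to_nat z) = IZR z) by (rewrite INR_IZR_INZ, Z2Nat.id; auto).
  split.
  - apply INR_le. rewrite Ei. nra.
  - rewrite Ei. replace (t - IZR z / INR Ng) with ((t * INR Ng - IZR z) / INR Ng) by (field; lra).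
    unfold Rdiv. rewrite Rabs_mult, Rabs_inv. rewrite (Rabs_right (INR Ng)) by lra.
    rewrite Rabs_right by lra. rewrite <- (Rmult_1_l (/ INR Ng)) at 2.
    apply Rmult_le_compat_r; [left; apply Rinv_0_lt_compat; auto|lra].
Qed.

Lemma grid_I (Ng : nat) i : (0 < Ng)%nat -> (i <= Ng)%nat -> I (INR i / INR Ng).
Proof.
  intros HN Hi. pose proof (lt_0_INR _ HN). apply le_INR in Hi. pose proof (pos_INR i).
  unfold I. split.
  - unfold Rdiv. apply Rmult_le_pos; [lra|left; apply Rinv_0_lt_compat; lra].
  - apply (Rmult_le_reg_r (INR Ng)); auto. unfold Rdiv. rewrite Rmult_assoc, Rinv_l; lra.
Qed.

Lemma grid_exists d theta : 0 < d -> 0 < theta -> exists Ng : nat, (0 < Ng)%nat /\ Rpower (/ INR Ng) d <= theta.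
Proof.
  intros Hd Ht. set (X := exp (Rabs (ln theta) / d)).
  assert (HX : 0 < X) by apply exp_pos.
  destruct (archimed X) as [A1 A2].
  assert (Hu0 : (0 <= up X)%Z) by (apply le_IZR; simpl; lra).
  exists (S (Z.to_nat (up X))). split; [lia|].
  assert (HN : X < INR (S (Z.to_nat (up X)))).
  { rewrite S_INR, INR_IZR_INZ, Z2Nat.id; auto. lra. }
  assert (HN0 : 0 < INR (S (Z.to_nat (up X)))) by lra.
  unfold Rpower. rewrite ln_Rinv by auto. rewrite <- (exp_ln theta) by auto. apply exp_le.
  assert (ln X < ln (INR (S (Z.to_nat (up X))))) by (apply ln_increasing; auto).
  assert (EX : ln X = Rabs (ln theta) / d) by (unfold X; apply ln_exp). rewrite EX in H.
  assert (Rabs (ln theta) < d * ln (INR (S (Z.to_nat (up X))))).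
  { apply (Rmult_lt_compat_l d) in H; auto. unfold Rdiv in H. 
    replace (d * (Rabs (ln theta) * / d)) with (Rabs (ln theta)) in H by (field; lra). lra. }
  pose proof (Rle_abs (- ln theta)). rewrite Rabs_Ropp in H1.
  replace (d * - ln (INR (S (Z.to_nat (up X))))) with (- (d * ln (INR (S (Z.to_nat (up X)))))) by ring. lra.
Qed.

Lemma inv_sym f g : inv_on_I f g -> inv_on_I g f.
Proof. intros [A [B C]]. split; auto. split; auto. intros x Ix. split; apply C; auto. Qed.

Lemma inv_unique h k1 k2 : inv_on_I h k1 -> inv_on_I h k2 -> same_on_I k1 k2.
Proof.
  intros [Mh [M1 H1]] [_ [M2 H2]] x Ix.
  destruct (H2 x Ix) as [_ E]. rewrite <- E at 1. apply H1. apply M2; auto.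
Qed.

Lemma Diff03_KG k : Diff03 k -> KG k.
Proof. intros H. destruct (Diff03_data k H) as [A [B [C [D [E _]]]]]. unfold KG; split; [exact A|split;[exact B|split;[exact C|split;[exact D|exact E]]]]. Qed.

Lemma p_same d F G F' : (forall t, I t -> F t = G t) -> (forall t, I t -> hd2 F t (F' t)) ->
  p_delta d F = p_delta d G.
Proof.
  intros E H. change (pv d (derI F) = pv d (derI G)). apply pv_ext. intros t It.
  rewrite (hd2_derI F t (F' t)) by auto. symmetry. apply hd2_derI; auto.
  apply (hd2_ext F); auto.
Qed.

Lemma comp_same d k k2 f : KG k -> C1 f -> maps_I f -> same_on_I k k2 ->
  p_delta d (fun x => k (f x)) = p_delta d (fun x => k2 (f x)).
Proof.
  intros Hk Cf Mf E. apply (p_same d _ _ (fun t => derI k (f t) * derI f t)).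
  - intros t It. apply E. apply Mf; auto.
  - intros t It. apply (comp_der k f Hk Cf Mf t It).
Qed.

Definition Sset (G : (R -> R) -> Prop) d (f : R -> R) := fun r => exists h hinv, G h /\ inv_on_I h hinv /\
                   r = p_delta d (fun x => hinv (f x)).

Lemma S_elem G d f r : is_subgroup_Diff03 G -> Diff1d d f -> Sset G d f r ->
  exists k, G k /\ r = p_delta d (fun x => k (f x)).
Proof.
  intros [HG [_ [_ Hinv]]] Hf [h [hinv [Gh [Hi ->]]]].
  destruct (Hinv h Gh) as [k [Gk Hk]]. exists k. split; auto.
  destruct (Diff1d_data d f Hf) as [Cf [Mf _]].
  symmetry. apply (p_same d _ _ (fun t => derI k (f t) * derI f t)).
  - intros t It. apply (inv_unique h k hinv); auto.
  - intros t It. apply (comp_der k f (Diff03_KG k (HG k Gk)) Cf Mf t It).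
Qed.

Lemma S_intro G d f k : is_subgroup_Diff03 G -> G k -> Sset G d f (p_delta d (fun x => k (f x))).
Proof.
  intros [HG [_ [_ Hinv]]] Gk. destruct (Hinv k Gk) as [h [Gh Hh]].
  exists h, k. split; auto. split; auto. apply inv_sym; auto.
Qed.

Lemma p_nonneg d k f : 0 < d <= 1 -> KG k -> Diff1d d f -> 0 <= p_delta d (fun x => k (f x)).
Proof.
  intros Hd Hk Hf. destruct (comp_data d k f Hd Hk Hf) as [m [Mu [Ku [Hm [Hb HB1]]]]].
  change (0 <= pv d (derI (fun x => k (f x)))). unfold pv.
  pose proof (Rabs_pos (ln (derI (fun x => k (f x)) 0))).
  assert (HB d (fun t => ln (derI (fun x => k (f x)) t)) (Ku / m)).
  { apply HB_ln; auto. intros t It; apply Hb; auto. }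
  pose proof (Hs_nonneg d _ _ H0). lra.
Qed.

Lemma r_glb G d f : 0 < d <= 1 -> is_subgroup_Diff03 G -> Diff1d d f ->
  is_glb (Sset G d f) (r_delta G d f).
Proof.
  intros Hd HG Hf. apply Rinf_glb.
  - pose proof HG as HG'. destruct HG' as [HG1 [[e [Ge Ee]] _]].
    exists (p_delta d (fun x => e (f x))). apply S_intro; auto.
  - exists 0. intros r Hr. destruct (S_elem G d f r HG Hf Hr) as [k [Gk ->]].
    apply p_nonneg; auto. apply Diff03_KG. apply HG; auto.
Qed.

Lemma r_usc G d f : 0 < d <= 1 -> is_subgroup_Diff03 G -> Diff1d d f -> forall eps, 0 < eps ->
  exists eta, 0 < eta /\ forall g, Diff1d d g -> norm1d d (fun x => g x - f x) < eta ->
  r_delta G d g < r_delta G d f + eps.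
Proof.
  intros Hd HG Hf eps Heps.
  destruct (glb_approx _ _ (r_glb G d f Hd HG Hf) (eps/2)) as [r [Hr Hrl]]; [lra|].
  destruct (S_elem G d f r HG Hf Hr) as [k [Gk ->]].
  assert (Hk : KG k) by (apply Diff03_KG; apply HG; auto).
  destruct (pk_cont d k f Hd Hk Hf (eps/2)) as [eta [He Heta]]; [lra|].
  exists eta. split; auto. intros g Hg HN.
  specialize (Heta g Hg HN).
  destruct (r_glb G d g Hd HG Hg) as [Hlow _].
  specialize (Hlow _ (S_intro G d g k HG Gk)).
  apply Rlt_le in Heta. apply abs_le_inv in Heta as [_ Hx].
  pose proof (Rle_abs (p_delta d (fun x => k (g x)) - p_delta d (fun x => k (f x)))).
  lra.
Qed.

Lemma lower_lip g g' m : (forall x, I x -> hd2 g x (g' x)) -> (forall x, I x -> m <= g' x) -> 0 <= m ->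
  forall t1 t2, I t1 -> I t2 -> m * Rabs (t2 - t1) <= Rabs (g t2 - g t1).
Proof.
  intros Hd Hm Hm0 t1 t2 I1 I2.
  destruct (Rtotal_order t1 t2) as [Hlt|[->|Hgt]].
  - destruct (rmvt g g' t1 t2 Hd I1 I2 Hlt) as [c [Hc E]].
    assert (Ic : I c) by (destruct I1, I2; unfold I; lra).
    rewrite E, Rabs_mult. apply Rmult_le_compat_r; [apply Rabs_pos|]. specialize (Hm c Ic).
    eapply Rle_trans; [apply Hm|apply Rle_abs].
  - replace (t2 - t2) with 0 by ring. rewrite Rabs_R0. rewrite Rmult_0_r. apply Rabs_pos.
  - destruct (rmvt g g' t2 t1 Hd I2 I1 Hgt) as [c [Hc E]].
    assert (Ic : I c) by (destruct I1, I2; unfold I; lra).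
    replace (g t2 - g t1) with (- (g t1 - g t2)) by ring. replace (t2 - t1) with (- (t1 - t2)) by ring.
    rewrite !Rabs_Ropp, E, Rabs_mult. apply Rmult_le_compat_r; [apply Rabs_pos|]. specialize (Hm c Ic).
    eapply Rle_trans; [apply Hm|apply Rle_abs].
Qed.

Lemma rel_bound d k f g mf Mf Kf M : 0 < d <= 1 -> KG k -> Diff1d d f -> Diff1d d g -> 0 < mf ->
  (forall t, I t -> mf <= derI f t <= Mf) -> HB d (derI f) Kf -> 0 <= Kf ->
  norm1d d (fun x => g x - f x) <= 1 -> norm1d d (fun x => g x - f x) <= mf / 2 -> 0 <= M ->
  p_delta d (fun x => k (g x)) <= M ->
  HB d (fun t => ln (derI k t)) ((M + (Kf + 1) / (mf / 2)) * Rpower (2 / mf) d).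
Proof.
  intros Hd Hk Hf Hg Hmf Hbf HKf HKf0 N1 N2 HM Hp.
  destruct (normfacts d f g ltac:(lra) Hf Hg) as [Ne [NHB [Ngf N0]]].
  set (N := norm1d d (fun x => g x - f x)) in *.
  destruct (Diff1d_data d g Hg) as [C1g [Mgi [_ [[ginv [Hginv _]] [Hgpos _]]]]].
  assert (Hgm : forall t, I t -> mf / 2 <= derI g t).
  { intros t It. specialize (Ne t It). apply abs_le_inv in Ne. pose proof (Hbf t It). lra. }
  assert (HBg : HB d (derI g) (Kf + 1)).
  { apply (HB_ext d (fun t => derI f t + (derI g t - derI f t))); [intros; ring|].
    apply HB_plus; auto. apply (HB_mono d _ N); auto. }
  assert (HBlg : HB d (fun t => ln (derI g t)) ((Kf + 1) / (mf / 2))) by (apply HB_ln; auto; lra).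
  destruct (comp_data d k g Hd Hk Hg) as [mu [Mu [Ku [Hmu [Hbu HBu]]]]].
  set (u := derI (fun x => k (g x))) in *.
  assert (HBlu : HB d (fun t => ln (u t)) (Ku / mu)) by (apply HB_ln; auto; intros t It; apply Hbu; auto).
  assert (HBlu2 : HB d (fun t => ln (u t)) M).
  { apply (HB_mono d _ (Hs d (fun t => ln (u t)))); [|apply (HB_Hs d _ _ HBlu)].
    change (Rabs (ln (u 0)) + Hs d (fun t => ln (u t)) <= M) in Hp. pose proof (Rabs_pos (ln (u 0))). lra. }
  assert (HBpsi : HB d (fun t => ln (derI k (g t))) (M + (Kf + 1) / (mf / 2))).
  { apply (HB_ext d (fun t => ln (u t) - ln (derI g t))).
    { intros t It. unfold u. rewrite (proj2 (comp_der k g Hk C1g Mgi t It)).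
      destruct Hk as [_ [_ [_ [Mk Hkp]]]].
      rewrite ln_mult; [ring| apply Hkp; apply Mgi; auto| apply Hgpos; auto]. }
    apply HB_minus; auto. }
  destruct Hginv as [_ [Mginv Hgg]].
  assert (Hpos2 : 0 < 2 / mf) by (apply Rdiv_lt_0_compat; lra).
  intros s1 s2 I1 I2 Hne.
  set (t1 := ginv s1). set (t2 := ginv s2).
  assert (It1 : I t1) by (apply Mginv; auto). assert (It2 : I t2) by (apply Mginv; auto).
  assert (E1 : g t1 = s1) by (apply Hgg; auto). assert (E2 : g t2 = s2) by (apply Hgg; auto).
  assert (Hne' : t1 <> t2) by (intros Heq; apply Hne; rewrite <- E1, <- E2, Heq; auto).
  specialize (HBpsi t1 t2 It1 It2 Hne'). cbv beta in HBpsi. rewrite E1, E2 in HBpsi.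
  eapply Rle_trans; [apply HBpsi|].
  assert (HM' : 0 <= M + (Kf + 1) / (mf / 2)) by (pose proof (Rdiv_lt_0_compat (Kf + 1) (mf / 2) ltac:(lra) ltac:(lra)); lra).
  rewrite Rmult_assoc. apply Rmult_le_compat_l; auto.
  rewrite Rpower_mult_distr; auto; [|apply Rabs_pos_lt; lra].
  apply Rle_Rpower_l; [lra|]. split; [apply Rabs_pos_lt; auto; intro; apply Hne'; lra|].
  pose proof (lower_lip g (derI g) (mf / 2) (proj1 C1g) Hgm ltac:(lra) t1 t2 It1 It2) as LL.
  rewrite E1, E2 in LL.
  apply (Rmult_le_reg_l (mf / 2)); [lra|].
  replace (mf / 2 * (2 / mf * Rabs (s2 - s1))) with (Rabs (s2 - s1)) by (field; lra). auto.
Qed.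

Lemma up_close x y : up x = up y -> Rabs (x - y) < 1.
Proof.
  intros E. destruct (archimed x) as [A1 A2]. destruct (archimed y) as [B1 B2]. rewrite E in A1, A2.
  apply Rabs_def1; lra.
Qed.

Lemma up_bound w A x : 0 < w -> Rabs x <= A ->
  (- (up (A / w) + 1) <= up (x / w) <= up (A / w) + 1)%Z.
Proof.
  intros Hw Hx. apply abs_le_inv in Hx.
  destruct (archimed (x / w)) as [A1 A2]. destruct (archimed (A / w)) as [B1 B2].
  assert (x / w <= A / w) by (unfold Rdiv; apply Rmult_le_compat_r; [left; apply Rinv_0_lt_compat|]; lra).
  assert (- (A / w) <= x / w) by (replace (- (A / w)) with ((- A) / w) by (field; lra); unfold Rdiv; apply Rmult_le_compat_r; [left; apply Rinv_0_lt_compat|]; lra).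
  assert (H1 : (- up (A / w) < up (x / w))%Z) by (apply lt_IZR; rewrite opp_IZR; lra).
  assert (H2 : (up (x / w) < up (A / w) + 1)%Z) by (apply lt_IZR; rewrite plus_IZR; simpl; lra).
  lia.
Qed.

Definition patf (Ng : nat) w (k : R -> R) : list Z :=
  map (fun i => up (ln (derI k (INR i / INR Ng)) / w)) (seq 0 (S Ng)).

Lemma pat_same d c A Ng k1 k2 : 0 < d -> 0 < c -> 0 <= A -> (0 < Ng)%nat ->
  Rpower (/ INR Ng) d <= c / (6 * (A + 1)) ->
  HB d (fun t => ln (derI k1 t)) A -> HB d (fun t => ln (derI k2 t)) A ->
  patf Ng (c / 3) k1 = patf Ng (c / 3) k2 ->
  forall t, I t -> Rabs (ln (derI k1 t) - ln (derI k2 t)) <= 2 * c / 3.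
Proof.
  intros Hd Hc HA HN Hp H1 H2 E t It.
  destruct (grid_near Ng t HN It) as [i [Hi Hti]].
  set (ti := INR i / INR Ng). assert (Iti : I ti) by (apply grid_I; auto).
  assert (Eg := map_eq_pt _ _ _ E i ltac:(apply in_seq; lia)). cbv beta in Eg.
  pose proof (up_close _ _ Eg) as Hc1. fold ti in Hc1.
  assert (Hw : Rabs (ln (derI k1 ti) - ln (derI k2 ti)) < c / 3).
  { replace (ln (derI k1 ti) - ln (derI k2 ti)) with ((ln (derI k1 ti) / (c / 3) - ln (derI k2 ti) / (c / 3)) * (c / 3)) by (field; lra).
    set (q := ln (derI k1 ti) / (c / 3) - ln (derI k2 ti) / (c / 3)) in *.
    rewrite Rabs_mult. rewrite (Rabs_right (c / 3)) by lra.
    assert (0 < c / 3) by lra. pose proof (Rabs_pos q). nra. }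
  assert (Hnear : forall (phi : R -> R), HB d phi A -> Rabs (phi t - phi ti) <= c / 6).
  { intros phi Hphi. destruct (Req_dec ti t) as [Heq|Hne].
    - rewrite Heq. replace (phi t - phi t) with 0 by ring. rewrite Rabs_R0. lra.
    - specialize (Hphi ti t Iti It Hne). eapply Rle_trans; [apply Hphi|].
      assert (Rpower (Rabs (t - ti)) d <= c / (6 * (A + 1))).
      { eapply Rle_trans; [|apply Hp]. apply Rle_Rpower_l; [lra|]. split; auto. apply Rabs_pos_lt. lra. }
      assert (A * (c / (6 * (A + 1))) <= c / 6).
      { unfold Rdiv. rewrite Rinv_mult. 
        assert (A * / (A + 1) <= 1) by (apply (Rmult_le_reg_r (A + 1)); [lra|]; rewrite Rmult_assoc, Rinv_l; lra).
        assert (0 < / (A + 1)) by (apply Rinv_0_lt_compat; lra).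
        replace (A * (c * (/ 6 * / (A + 1)))) with ((A * / (A + 1)) * (c * / 6)) by ring. nra. }
      pose proof (rp_pos (Rabs (t - ti)) d). nra. }
  pose proof (Hnear _ H1). pose proof (Hnear _ H2).
  replace (ln (derI k1 t) - ln (derI k2 t)) with
    ((ln (derI k1 t) - ln (derI k1 ti)) + (ln (derI k1 ti) - ln (derI k2 ti)) - (ln (derI k2 t) - ln (derI k2 ti))) by ring.
  eapply Rle_trans; [apply Rabs_triang|]. rewrite Rabs_Ropp.
  pose proof (Rabs_triang (ln (derI k1 t) - ln (derI k1 ti)) (ln (derI k1 ti) - ln (derI k2 ti))). lra.
Qed.

Lemma r_nonneg G d f : 0 < d <= 1 -> is_subgroup_Diff03 G -> Diff1d d f -> 0 <= r_delta G d f.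
Proof.
  intros Hd HG Hf. destruct (r_glb G d f Hd HG Hf) as [_ H2]. apply H2.
  intros r Hr. destruct (S_elem G d f r HG Hf Hr) as [k [Gk ->]].
  apply p_nonneg; auto. apply Diff03_KG. apply HG; auto.
Qed.

Lemma r_lsc G d f : 0 < d <= 1 -> is_subgroup_Diff03 G -> condition_a G -> Diff1d d f ->
  forall eps, 0 < eps -> eps <= 1 ->
  exists eta, 0 < eta /\ forall g, Diff1d d g -> norm1d d (fun x => g x - f x) < eta ->
  r_delta G d f < r_delta G d g + eps.
Proof.
  intros Hd HG [c [Hc Hca]] Hf eps Heps Heps1.
  destruct (fdata d f ltac:(lra) Hf) as [mf [Mf [Kf [Hmf [HKf0 [Hbf HKf]]]]]].
  set (rf := r_delta G d f). assert (Hrf : 0 <= rf) by (apply r_nonneg; auto).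
  set (M := rf + 1).
  set (A := (M + (Kf + 1) / (mf / 2)) * Rpower (2 / mf) d).
  assert (HA : 0 <= A).
  { unfold A. apply Rmult_le_pos; [|left; apply rp_pos].
    pose proof (Rdiv_lt_0_compat (Kf + 1) (mf / 2) ltac:(lra) ltac:(lra)). unfold M; lra. }
  set (Rel := fun k => G k /\ HB d (fun t => ln (derI k t)) A).
  destruct (grid_exists d (c / (6 * (A + 1))) ltac:(lra) ltac:(apply Rdiv_lt_0_compat; lra)) as [Ng [HNg HNp]].
  set (w := c / 3). set (Q := (up (A / w) + 1)%Z).
  assert (Hin : forall k, Rel k -> In (patf Ng w k) (allL Q (S Ng))).
  { intros k [Gk Hk].
    replace (S Ng) with (length (patf Ng w k)) by (unfold patf; rewrite length_map, length_seq; auto).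
    apply allL_in. intros z Hz. unfold patf in Hz. apply in_map_iff in Hz as [i [<- Hi]].
    apply in_seq in Hi.
    assert (D0 : derI k 0 = 1) by (apply (Diff03_data k (proj1 HG k Gk))).
    assert (I0 : I 0) by (unfold I; lra).
    pose proof (HB_sup d _ _ ltac:(lra) Hk (INR i / INR Ng) (grid_I Ng i HNg ltac:(lia))) as Hb.
    cbv beta in Hb. rewrite D0, ln_1, Rabs_R0, Rplus_0_l in Hb.
    apply up_bound; auto; unfold w; lra. }
  destruct (cover Rel (patf Ng w) (allL Q (S Ng))) as [L HL].
  destruct (min_eta Rel (fun k g => Diff1d d g ->
      Rabs (p_delta d (fun x => k (g x)) - p_delta d (fun x => k (f x))) < eps / 2)
      (fun g => norm1d d (fun x => g x - f x)) L) as [eta1 [Heta1 H1]].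
  { intros k _ [Gk _]. destruct (pk_cont d k f Hd (Diff03_KG k (proj1 HG k Gk)) Hf (eps / 2)) as [e [He He2]]; [lra|].
    exists e. split; [auto|]. intros g Hg Hg'. apply He2; auto. }
  destruct (r_usc G d f Hd HG Hf (1 / 2)) as [eta2 [Heta2 H2]]; [lra|].
  exists (Rmin (Rmin 1 (mf / 2)) (Rmin eta1 eta2)). split.
  { repeat apply Rmin_case; lra. }
  intros g Hg HN.
  assert (N1 : norm1d d (fun x => g x - f x) <= 1) by (left; eapply Rlt_le_trans; [apply HN|]; eapply Rle_trans; [apply Rmin_l|apply Rmin_l]).
  assert (N2 : norm1d d (fun x => g x - f x) <= mf / 2) by (left; eapply Rlt_le_trans; [apply HN|]; eapply Rle_trans; [apply Rmin_l|apply Rmin_r]).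
  assert (N3 : norm1d d (fun x => g x - f x) < eta1) by (eapply Rlt_le_trans; [apply HN|]; eapply Rle_trans; [apply Rmin_r|apply Rmin_l]).
  assert (N4 : norm1d d (fun x => g x - f x) < eta2) by (eapply Rlt_le_trans; [apply HN|]; eapply Rle_trans; [apply Rmin_r|apply Rmin_r]).
  specialize (H2 g Hg N4). fold rf in H2.
  destruct (glb_approx _ _ (r_glb G d g Hd HG Hg) (eps / 2)) as [s [Hs Hsl]]; [lra|].
  destruct (S_elem G d g s HG Hg Hs) as [k [Gk ->]].
  assert (Hk : KG k) by (apply Diff03_KG; apply HG; auto).
  assert (Relk : Rel k).
  { split; auto. apply (rel_bound d k f g mf Mf Kf M); auto. unfold M; lra. unfold M; lra. }
  destruct (HL k Relk (Hin k Relk)) as [k' [Ink' [Relk' Epat]]].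
  assert (Hk' : KG k') by (apply Diff03_KG; apply HG; apply Relk').
  assert (Same : same_on_I k' k).
  { apply NNPP. intros Hns. specialize (Hca k' k (proj1 Relk') Gk Hns).
    assert (Rsup (fun r => exists t, I t /\ r = Rabs (ln (derI k' t) - ln (derI k t))) <= 2 * c / 3).
    { apply Rsup_le.
      - exists (Rabs (ln (derI k' 0) - ln (derI k 0))). exists 0. split; auto. unfold I; lra.
      - intros r [t [It ->]]. apply (pat_same d c A Ng k' k); try lra; auto; apply Relk' || apply Relk || auto. }
    lra. }
  destruct (Diff1d_data d g Hg) as [C1g [Mgi _]].
  rewrite <- (comp_same d k' k g Hk' C1g Mgi Same) in Hsl.
  specialize (H1 k' Ink' Relk' g N3 Hg).
  destruct (r_glb G d f Hd HG Hf) as [Hlow _].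
  specialize (Hlow _ (S_intro G d f k' HG (proj1 Relk'))). fold rf in Hlow.
  apply Rlt_le in H1. apply abs_le_inv in H1.
  pose proof (Rle_abs (p_delta d (fun x => k' (g x)) - p_delta d (fun x => k' (f x)))).
  lra.
Qed.

Theorem mainTheorem16 (delta : R) (G : (R -> R) -> Prop) :
  0 < delta < 1 / 2 ->
  is_subgroup_Diff03 G ->
  condition_a G ->
  cont_Diff1d delta (p_delta delta) /\ cont_Diff1d delta (r_delta G delta).
Proof.
  intros Hd HG Ha. assert (Hd' : 0 < delta <= 1) by lra. split.
  - apply p_cont; auto.
  - intros f Hf eps Heps.
    set (e := Rmin eps 1). assert (He : 0 < e) by (unfold e; apply Rmin_case; lra).
    assert (He1 : e <= 1) by apply Rmin_r. assert (He2 : e <= eps) by apply Rmin_l.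
    destruct (r_usc G delta f Hd' HG Hf e He) as [e1 [He1' H1]].
    destruct (r_lsc G delta f Hd' HG Ha Hf e He He1) as [e2 [He2' H2]].
    exists (Rmin e1 e2). split; [apply Rmin_case; lra|].
    intros g Hg HN.
    specialize (H1 g Hg (Rlt_le_trans _ _ _ HN (Rmin_l _ _))).
    specialize (H2 g Hg (Rlt_le_trans _ _ _ HN (Rmin_r _ _))).
    apply Rabs_def1; lra.
Qed.
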